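(* For every $r, d \ge 0$, the first-order theory of $\mathrm{TM}_r(d)$ equals the first-order theory of $\mathrm{TM}^{\mathrm{fin}}_r(d)$, and the MSO theory of $\mathrm{TM}_r(d)$ equals the MSO theory of $\mathrm{TM}^{\mathrm{fin}}_r(d)$.
   Context: Graphs are simple undirected graphs of arbitrary cardinality. A tree model of $r$ labels and height $d$ is a pair $(t,S)$ where $t$ is an $(r+1)$-labeled rooted tree (a tree with a distinguished root whose nodes are partitioned into label classes $P_1,\dots,P_{r+1}$, possibly infinite) and $S \subseteq [r]^2\times[d]$ such that: every root-to-leaf path has length exactly $d$; leaves are labeled from $[r]$ and internal nodes with $r+1$; $(i,j,l)\in S$ iff $(j,i,l)\in S$. It is a tree model of the graph whose vertices are the leaves of $t$, two leaves with labels $i,j$ at distance $2l$ in $t$ being adjacent iff $(i,j,l)\in S$. $\mathrm{TM}_r(d)$ is the class of all graphs isomorphic to a graph having such a tree model, and $\mathrm{TM}^{\mathrm{fin}}_r(d)$ is the class of finite graphs in $\mathrm{TM}_r(d)$. For a logic $\mathcal{L}\in\{\mathrm{FO},\mathrm{MSO}\}$ and a class $\mathcal{C}$ of graphs, the $\mathcal{L}$ theory of $\mathcal{C}$ is the set of all $\mathcal{L}$ sentences (over the vocabulary $\{E\}$) true in every graph of $\mathcal{C}$. *)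

(* Defs.v *)
From Stdlib Require Import List Arith.
Import ListNotations.

Record graph := Graph { gV : Type; gE : gV -> gV -> Prop }.

Definition simple_graph (G : graph) : Prop :=
  (forall x y : gV G, gE G x y -> gE G y x) /\ (forall x : gV G, ~ gE G x x).

Definition graph_iso (G H : graph) : Prop :=
  exists (f : gV G -> gV H) (g : gV H -> gV G),
    (forall x, g (f x) = x) /\ (forall y, f (g y) = y) /\
    (forall x y, gE G x y <-> gE H (f x) (f y)).

Definition finite_graph (G : graph) : Prop :=
  exists l : list (gV G), forall x, In x l.

Definition graph_class := graph -> Prop.

Record rtree := RTree {
  tnode : Type;
  troot : tnode;
  tpar : tnode -> tnode;
  tdepth : tnode -> nat;
  tpar_root : tpar troot = troot;
  tdepth_root : tdepth troot = 0;
  tdepth_par : forall x, x <> troot -> S (tdepth (tpar x)) = tdepth x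
}.

Definition tedge (t : rtree) (x y : tnode t) : Prop :=
  (x <> troot t /\ y = tpar t x) \/ (y <> troot t /\ x = tpar t y).

Inductive twalk (t : rtree) : tnode t -> tnode t -> nat -> Prop :=
| twalk_nil : forall x, twalk t x x 0
| twalk_cons : forall x y z n, tedge t x y -> twalk t y z n -> twalk t x z (S n).

Definition tdist (t : rtree) (u v : tnode t) (n : nat) : Prop :=
  twalk t u v n /\ forall m, twalk t u v m -> n <= m.

Definition is_leaf (t : rtree) (x : tnode t) : Prop :=
  forall y, y <> troot t -> tpar t y <> x.

(* [r] = {1,...,r}; label r+1 is the label of internal nodes.
   S is given as a relation on nat^3 contained in [r]^2 x [d]. *)
Record tree_model (r d : nat) := TreeModel {
  tm_tree : rtree;
  tm_lab : tnode tm_tree -> nat;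
  tm_S : nat -> nat -> nat -> Prop;
  tm_depth_le : forall x, tdepth tm_tree x <= d;
  tm_leaf_depth : forall x, is_leaf tm_tree x -> tdepth tm_tree x = d;
  tm_lab_leaf : forall x, is_leaf tm_tree x -> 1 <= tm_lab x <= r;
  tm_lab_internal : forall x, ~ is_leaf tm_tree x -> tm_lab x = S r;
  tm_S_range : forall i j l, tm_S i j l ->
      (1 <= i <= r) /\ (1 <= j <= r) /\ (1 <= l <= d);
  tm_S_sym : forall i j l, tm_S i j l <-> tm_S j i l
}.

Arguments tm_tree {r d}.
Arguments tm_lab {r d}.
Arguments tm_S {r d}.

Definition tm_graph {r d : nat} (M : tree_model r d) : graph :=
  Graph {x : tnode (tm_tree M) | is_leaf (tm_tree M) x}
        (fun u v => exists l, tdist (tm_tree M) (proj1_sig u) (proj1_sig v) (2 * l)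
                      /\ tm_S M (tm_lab M (proj1_sig u)) (tm_lab M (proj1_sig v)) l).

Definition TM (r d : nat) : graph_class :=
  fun G => simple_graph G /\ exists M : tree_model r d, graph_iso (tm_graph M) G.

Definition TMfin (r d : nat) : graph_class :=
  fun G => TM r d G /\ finite_graph G.

Inductive fo : Type :=
| FEq  : nat -> nat -> fo
| FAdj : nat -> nat -> fo
| FTrue : fo
| FFalse : fo
| FNot : fo -> fo
| FAnd : fo -> fo -> fo
| FOr  : fo -> fo -> fo
| FImp : fo -> fo -> fo
| FEx  : nat -> fo -> fo
| FAll : nat -> fo -> fo.

Fixpoint fo_wf (Γ : list nat) (φ : fo) : Prop :=
  match φ with
  | FEq x y | FAdj x y => In x Γ /\ In y Γ
  | FTrue | FFalse => True
  | FNot a => fo_wf Γ a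
  | FAnd a b | FOr a b | FImp a b => fo_wf Γ a /\ fo_wf Γ b
  | FEx x a | FAll x a => fo_wf (x :: Γ) a
  end.

Definition fo_sentence (φ : fo) : Prop := fo_wf [] φ.

Definition upd {A : Type} (ρ : nat -> option A) (x : nat) (a : A) : nat -> option A :=
  fun y => if Nat.eqb y x then Some a else ρ y.

Definition atom2 {V : Type} (P : V -> V -> Prop) (ρ : nat -> option V) (x y : nat) : Prop :=
  match ρ x, ρ y with Some a, Some b => P a b | _, _ => False end.

Fixpoint fo_sat (G : graph) (ρ : nat -> option (gV G)) (φ : fo) : Prop :=
  match φ with
  | FEq x y => atom2 (@eq (gV G)) ρ x y
  | FAdj x y => atom2 (gE G) ρ x y
  | FTrue => True
  | FFalse => False
  | FNot a => ~ fo_sat G ρ a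
  | FAnd a b => fo_sat G ρ a /\ fo_sat G ρ b
  | FOr a b => fo_sat G ρ a \/ fo_sat G ρ b
  | FImp a b => fo_sat G ρ a -> fo_sat G ρ b
  | FEx x a => exists v : gV G, fo_sat G (upd ρ x v) a
  | FAll x a => forall v : gV G, fo_sat G (upd ρ x v) a
  end.

Definition fo_models (G : graph) (φ : fo) : Prop := fo_sat G (fun _ => None) φ.

Definition FO_theory (C : graph_class) : fo -> Prop :=
  fun φ => fo_sentence φ /\ forall G, C G -> fo_models G φ.

Inductive mso : Type :=
| MEq  : nat -> nat -> mso
| MAdj : nat -> nat -> mso
| MIn  : nat -> nat -> mso            (* MIn x X : element variable x in set variable X *)
| MTrue : mso
| MFalse : mso
| MNot : mso -> mso
| MAnd : mso -> mso -> mso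
| MOr  : mso -> mso -> mso
| MImp : mso -> mso -> mso
| MEx  : nat -> mso -> mso
| MAll : nat -> mso -> mso
| MExS : nat -> mso -> mso
| MAllS : nat -> mso -> mso.

Fixpoint mso_wf (Γ Δ : list nat) (φ : mso) : Prop :=
  match φ with
  | MEq x y | MAdj x y => In x Γ /\ In y Γ
  | MIn x X => In x Γ /\ In X Δ
  | MTrue | MFalse => True
  | MNot a => mso_wf Γ Δ a
  | MAnd a b | MOr a b | MImp a b => mso_wf Γ Δ a /\ mso_wf Γ Δ b
  | MEx x a | MAll x a => mso_wf (x :: Γ) Δ a
  | MExS X a | MAllS X a => mso_wf Γ (X :: Δ) a
  end.

Definition mso_sentence (φ : mso) : Prop := mso_wf [] [] φ.

Definition supd {A : Type} (σ : nat -> A -> Prop) (X : nat) (P : A -> Prop)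
  : nat -> A -> Prop :=
  fun Y => if Nat.eqb Y X then P else σ Y.

Fixpoint mso_sat (G : graph) (ρ : nat -> option (gV G)) (σ : nat -> gV G -> Prop)
    (φ : mso) : Prop :=
  match φ with
  | MEq x y => atom2 (@eq (gV G)) ρ x y
  | MAdj x y => atom2 (gE G) ρ x y
  | MIn x X => match ρ x with Some a => σ X a | None => False end
  | MTrue => True
  | MFalse => False
  | MNot a => ~ mso_sat G ρ σ a
  | MAnd a b => mso_sat G ρ σ a /\ mso_sat G ρ σ b
  | MOr a b => mso_sat G ρ σ a \/ mso_sat G ρ σ b
  | MImp a b => mso_sat G ρ σ a -> mso_sat G ρ σ b
  | MEx x a => exists v : gV G, mso_sat G (upd ρ x v) σ a
  | MAll x a => forall v : gV G, mso_sat G (upd ρ x v) σ a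
  | MExS X a => exists P : gV G -> Prop, mso_sat G ρ (supd σ X P) a
  | MAllS X a => forall P : gV G -> Prop, mso_sat G ρ (supd σ X P) a
  end.

Definition mso_models (G : graph) (φ : mso) : Prop :=
  mso_sat G (fun _ => None) (fun _ _ => False) φ.

Definition MSO_theory (C : graph_class) : mso -> Prop :=
  fun φ => mso_sentence φ /\ forall G, C G -> mso_models G φ.

(* Main.v *)
Require Import Defs.
From Stdlib Require Import List Arith Lia ClassicalEpsilon ProofIrrelevance Classical.
Import ListNotations.

Definition bP (P : Prop) : nat := if excluded_middle_informative P then 1 else 0.

Lemma bP_le1 P : bP P <= 1.
Proof. unfold bP; destruct excluded_middle_informative; lia. Qed.
Lemma bP_1 P : bP P = 1 <-> P.
Proof. unfold bP; destruct excluded_middle_informative; split; intros; try lia; tauto. Qed.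

Definition atleast {X} (m : nat) (P : X -> Prop) :=
  exists l, NoDup l /\ length l = m /\ forall x, In x l -> P x.

Fixpoint cap {X} (t : nat) (P : X -> Prop) : nat :=
  match t with
  | 0 => 0
  | S t' => if excluded_middle_informative (atleast (S t') P) then S t' else cap t' P
  end.

Lemma NoDup_firstn' {X} (l : list X) k : NoDup l -> NoDup (firstn k l).
Proof. intro H. rewrite <- (firstn_skipn k l) in H. eapply NoDup_app_remove_r; eauto. Qed.
Lemma NoDup_skipn' {X} (l : list X) k : NoDup l -> NoDup (skipn k l).
Proof. intro H. rewrite <- (firstn_skipn k l) in H. eapply NoDup_app_remove_l; eauto. Qed.
Lemma In_firstn' {X} (l : list X) k x : In x (firstn k l) -> In x l.
Proof. intro H. rewrite <- (firstn_skipn k l). apply in_or_app; auto. Qed.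
Lemma In_skipn' {X} (l : list X) k x : In x (skipn k l) -> In x l.
Proof. intro H. rewrite <- (firstn_skipn k l). apply in_or_app; auto. Qed.

Lemma atleast_0 {X} (P : X -> Prop) : atleast 0 P.
Proof. exists []; repeat split; simpl; auto; [constructor| tauto]. Qed.

Lemma atleast_le {X} (P : X -> Prop) m k : atleast m P -> k <= m -> atleast k P.
Proof.
  intros (l & Hn & Hl & Hp) Hk. exists (firstn k l). split; [apply NoDup_firstn'; auto|].
  split; [rewrite length_firstn; lia|]. intros x Hx; apply Hp; eapply In_firstn'; eauto.
Qed.

Lemma atleast_imp {X} (P Q : X -> Prop) m : (forall x, P x -> Q x) -> atleast m P -> atleast m Q.
Proof. intros H (l & ? & ? & ?); exists l; eauto. Qed.

Lemma cap_le {X} t (P : X -> Prop) : cap t P <= t.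
Proof. induction t; simpl; auto. destruct excluded_middle_informative; lia. Qed.

Lemma cap_atleast {X} t (P : X -> Prop) : atleast (cap t P) P.
Proof. induction t; simpl; [apply atleast_0|]. destruct excluded_middle_informative; auto. Qed.

Lemma cap_max {X} t (P : X -> Prop) m : m <= t -> atleast m P -> m <= cap t P.
Proof.
  induction t; simpl; intros Hm Ha; [lia|].
  destruct excluded_middle_informative as [h|h]; [lia|].
  destruct (Nat.eq_dec m (S t)); [subst; tauto|]. apply IHt; auto; lia.
Qed.

Lemma cap_eq {X Y} t (P : X -> Prop) (Q : Y -> Prop) :
  (forall m, m <= t -> (atleast m P <-> atleast m Q)) -> cap t P = cap t Q.
Proof.
  induction t; simpl; intros H; auto.
  destruct excluded_middle_informative as [h|h];
  destruct excluded_middle_informative as [h'|h']; auto.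
  - exfalso; apply h'; apply H; auto.
  - exfalso; apply h; apply H; auto.
Qed.

Lemma cap_atleast_iff {X} t (P : X -> Prop) m : m <= t -> (atleast m P <-> m <= cap t P).
Proof.
  intros Hm; split; [apply cap_max; auto|].
  intros H; eapply atleast_le; [apply cap_atleast|]; eauto.
Qed.

Lemma cap_eq_iff {X Y} t (P : X -> Prop) (Q : Y -> Prop) :
  cap t P = cap t Q -> forall m, m <= t -> (atleast m P <-> atleast m Q).
Proof. intros H m Hm. rewrite (cap_atleast_iff t P m Hm), (cap_atleast_iff t Q m Hm). rewrite H; tauto. Qed.

Lemma cap_ext {X} t (P Q : X -> Prop) : (forall x, P x <-> Q x) -> cap t P = cap t Q.
Proof. intros H; apply cap_eq; intros; split; apply atleast_imp; firstorder. Qed.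

Lemma cap_big {X} t (P : X -> Prop) : atleast t P -> cap t P = t.
Proof. intros H. pose proof (cap_le t P). pose proof (cap_max t P t (le_n _) H). lia. Qed.

Lemma cap_small_list {X} t (P : X -> Prop) :
  cap t P < t -> exists l, NoDup l /\ length l = cap t P /\ forall x, P x <-> In x l.
Proof.
  intros Hlt. destruct (cap_atleast t P) as (l & Hn & Hl & Hp).
  exists l; split; auto; split; auto. intros x; split; auto.
  intros Hx. destruct (classic (In x l)) as [|Hni]; auto. exfalso.
  assert (atleast (S (cap t P)) P) as Ha.
  { exists (x :: l); split; [constructor; auto|]. split; simpl; [lia|]. intros y [->|Hy]; auto. }
  apply (cap_max t) in Ha; lia.
Qed.

Lemma atleast_list {X} (P : X -> Prop) l m : NoDup l -> (forall x, P x <-> In x l) ->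
  (atleast m P <-> m <= length l).
Proof.
  intros Hn Hl; split.
  - intros (l' & Hn' & Hl' & Hp'). subst. apply NoDup_incl_length; auto.
    intros x Hx; apply Hl; auto.
  - intros Hm. apply atleast_le with (length l); auto. exists l; repeat split; auto.
    intros; apply Hl; auto.
Qed.

Lemma cap_list {X} t (P : X -> Prop) l : NoDup l -> (forall x, P x <-> In x l) ->
  cap t P = Nat.min t (length l).
Proof.
  intros Hn Hl. apply Nat.le_antisymm.
  - pose proof (cap_le t P). pose proof (cap_atleast t P) as Ha.
    rewrite (atleast_list P l) in Ha; auto. lia.
  - apply cap_max; [lia|]. rewrite (atleast_list P l); auto; lia.
Qed.

Lemma NoDup_map_on {X Y} (g : X -> Y) l : NoDup l ->
  (forall x y, In x l -> In y l -> g x = g y -> x = y) -> NoDup (map g l).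
Proof.
  induction l as [|a l IH]; simpl; intros Hn Hi; constructor.
  - inversion Hn; subst. intros Hin. apply in_map_iff in Hin as (y & Hy & Hyl).
    assert (y = a) by (apply Hi; auto). subst; tauto.
  - inversion Hn; subst. apply IH; auto.
Qed.

Lemma atleast_inj {X Y} (Q : Y -> Prop) (P : X -> Prop) (g : Y -> X) m :
  (forall y, Q y -> P (g y)) -> (forall y y', Q y -> Q y' -> g y = g y' -> y = y') ->
  atleast m Q -> atleast m P.
Proof.
  intros Hm Hi (l & Hn & Hl & Hq). exists (map g l). split.
  - apply NoDup_map_on; auto.
  - rewrite length_map; split; auto. intros x Hx. apply in_map_iff in Hx as (y & <- & Hy); auto.
Qed.

Lemma atleast_surj {X Y} (Q : Y -> Prop) (P : X -> Prop) (g : Y -> X) m :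
  (forall x, P x -> exists y, Q y /\ g y = x) -> atleast m P -> atleast m Q.
Proof.
  intros Hs (l & Hn & Hl & Hp). subst m.
  assert (exists l', map g l' = l /\ forall y, In y l' -> Q y) as (l' & Hl' & Hq).
  { clear Hn. induction l as [|a l IH].
    - exists []; simpl; tauto.
    - destruct IH as (l' & H1 & H2). { intros; apply Hp; simpl; auto. }
      destruct (Hs a) as (y & Hy & Hya). { apply Hp; simpl; auto. }
      exists (y :: l'); simpl; split; [congruence|]. intros z [<-|Hz]; auto. }
  exists l'. split; [|split]; auto.
  - subst. eapply NoDup_map_inv; eauto.
  - subst; rewrite length_map; auto.
Qed.

Lemma cap_bij {X Y} t (Q : Y -> Prop) (P : X -> Prop) (g : Y -> X) :
  (forall y, Q y -> P (g y)) -> (forall y y', Q y -> Q y' -> g y = g y' -> y = y') ->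
  (forall x, P x -> exists y, Q y /\ g y = x) -> cap t Q = cap t P.
Proof.
  intros H1 H2 H3. apply cap_eq; intros m _; split.
  - apply atleast_inj with g; auto.
  - apply atleast_surj with g; auto.
Qed.

Lemma combine_map {X Y} (F : X -> Y) (l : list X) e k :
  In (e, k) (combine l (map F l)) <-> In e l /\ k = F e.
Proof.
  induction l as [|a l IH]; simpl; [tauto|]. rewrite IH. split.
  - intros [H|H]; [inversion H; subst; auto|tauto].
  - intros [[->|H] ->]; auto.
Qed.

Fixpoint all_lists (n R : nat) : list (list nat) :=
  match n with
  | 0 => [[]]
  | S n' => flat_map (fun x => map (cons x) (all_lists n' R)) (seq 0 (S R))
  end.

Lemma all_lists_spec n R l : In l (all_lists n R) <-> length l = n /\ forall x, In x l -> x <= R.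
Proof.
  revert l; induction n; intros l; cbn [all_lists].
  - split; [intros [<-|[]]; simpl; tauto|]. intros [H _]; destruct l; simpl in *; auto; lia.
  - rewrite in_flat_map. split.
    + intros (x & Hx & Hl). apply in_map_iff in Hl as (l' & <- & Hl').
      apply IHn in Hl' as [H1 H2]. apply in_seq in Hx. simpl; split; [lia|].
      intros y [<-|Hy]; auto; lia.
    + intros [Hlen Hb]. destruct l as [|x l']; simpl in Hlen; [lia|].
      exists x; split; [apply in_seq; specialize (Hb x (or_introl eq_refl)); lia|].
      apply in_map; apply IHn; split; [lia|]. intros; apply Hb; simpl; auto.
Qed.

Fixpoint Efam (E0 : list (list nat)) (t n : nat) : list (list nat) :=
  match n with
  | 0 => E0
  | S m => all_lists (length (Efam E0 t m)) t
  end.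

Section Trees.
Variable T : rtree.

Definition iter n v := Nat.iter n (tpar T) v.
Definition child (u c : tnode T) := c <> troot T /\ tpar T c = u.
Definition desc n (u v : tnode T) := iter n v = u /\ tdepth T v = n + tdepth T u.

Lemma depth_nonroot x : x <> troot T -> tdepth T x = S (tdepth T (tpar T x)).
Proof. intros H; symmetry; apply tdepth_par; auto. Qed.

Lemma depth0_root x : tdepth T x = 0 -> x = troot T.
Proof.
  intros H. destruct (classic (x = troot T)) as [|Hn]; auto.
  rewrite depth_nonroot in H; auto; lia.
Qed.

Lemma iter_S n v : iter (S n) v = tpar T (iter n v).
Proof. reflexivity. Qed.

Lemma iter_add a b v : iter (a + b) v = iter a (iter b v).
Proof. unfold iter; apply Nat.iter_add. Qed.

Lemma iter_depth j v : j <= tdepth T v -> tdepth T (iter j v) = tdepth T v - j.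
Proof.
  induction j; intros Hj; [simpl; lia|]. rewrite iter_S.
  assert (Hd : tdepth T (iter j v) = tdepth T v - j) by (apply IHj; lia).
  assert (iter j v <> troot T) as Hn.
  { intros He. rewrite He, tdepth_root in Hd. lia. }
  rewrite (depth_nonroot _ Hn) in Hd. lia.
Qed.

Lemma iter_root v : iter (tdepth T v) v = troot T.
Proof. apply depth0_root. rewrite iter_depth; lia. Qed.

Lemma desc_0 u v : desc 0 u v <-> v = u.
Proof. unfold desc; simpl; split; [tauto|]. intros ->; auto. Qed.

Lemma desc_S m u v : desc (S m) u v <-> exists c, child u c /\ desc m c v.
Proof.
  unfold desc, child. split.
  - intros [H1 H2]. exists (iter m v).
    assert (Hd : tdepth T (iter m v) = tdepth T v - m) by (apply iter_depth; lia).
    assert (Hn : iter m v <> troot T).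
    { intros He; rewrite He, tdepth_root in Hd; lia. }
    split; [split; [exact Hn| rewrite <- iter_S; exact H1]|]. split; auto. rewrite Hd. lia.
  - intros (c & [Hc Hp] & H1 & H2). split.
    + rewrite iter_S, H1; auto.
    + rewrite H2, (depth_nonroot _ Hc), Hp. lia.
Qed.

Lemma desc_iter n u v : desc n u v -> iter n v = u.
Proof. intros [H _]; auto. Qed.

Lemma desc_root v : desc (tdepth T v) (troot T) v.
Proof. split; [apply iter_root|]. rewrite tdepth_root; lia. Qed.

Lemma desc_depth n u v : desc n u v -> tdepth T v = n + tdepth T u.
Proof. intros [_ H]; auto. Qed.

Variable E0 : list (list nat).

Fixpoint ty (t : nat) (dec : tnode T -> list nat) (n : nat) (u : tnode T) : list nat :=
  match n with
  | 0 => dec u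
  | S m => map (fun e => cap t (fun c => child u c /\ ty t dec m c = e)) (Efam E0 t m)
  end.

Lemma ty_in_E t dec : (forall u, In (dec u) E0) -> forall n u, In (ty t dec n u) (Efam E0 t n).
Proof.
  intros Hd n u; destruct n; simpl; auto. apply all_lists_spec. rewrite length_map; split; auto.
  intros x Hx; apply in_map_iff in Hx as (e & <- & _). apply cap_le.
Qed.

Lemma ty_local t dec1 dec2 n u : (forall v, desc n u v -> dec1 v = dec2 v) ->
  ty t dec1 n u = ty t dec2 n u.
Proof.
  revert u; induction n; intros u H; simpl.
  - apply H; apply desc_0; auto.
  - apply map_ext; intros e. apply cap_ext; intros c. split; intros [Hc He]; split; auto;
    rewrite <- He; [symmetry|]; apply IHn; intros v Hv; apply H; apply desc_S; eauto.
Qed.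

Lemma ty_S_combine t dec m u e k :
  In (e, k) (combine (Efam E0 t m) (ty t dec (S m) u)) <->
  In e (Efam E0 t m) /\ k = cap t (fun c => child u c /\ ty t dec m c = e).
Proof. simpl. apply (combine_map (fun e => cap t (fun c => child u c /\ ty t dec m c = e))). Qed.

Fixpoint has (t : nat) (Q : list nat -> Prop) (n : nat) (tau : list nat) : Prop :=
  match n with
  | 0 => Q tau
  | S m => exists e k, In (e, k) (combine (Efam E0 t m) tau) /\ 1 <= k /\ has t Q m e
  end.

Lemma atleast1 {X} (P : X -> Prop) : atleast 1 P <-> exists x, P x.
Proof.
  split.
  - intros ([|x l] & _ & Hl & Hp); simpl in Hl; [lia|]. exists x; apply Hp; simpl; auto.
  - intros [x Hx]; exists [x]; split; [repeat constructor; simpl; tauto|]. split; auto.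
    intros y [<-|[]]; auto.
Qed.

Lemma cap_ge1 {X} t (P : X -> Prop) : 1 <= t -> (1 <= cap t P <-> exists x, P x).
Proof. intros Ht. rewrite <- (cap_atleast_iff t P 1 Ht). apply atleast1. Qed.

Lemma has_ty t dec Q : 1 <= t -> (forall u, In (dec u) E0) ->
  forall n u, has t Q n (ty t dec n u) <-> exists v, desc n u v /\ Q (dec v).
Proof.
  intros Ht Hd; induction n; intros u.
  - simpl. split; [intros H; exists u; split; auto; apply desc_0; auto|].
    intros (v & Hv & HQ). apply desc_0 in Hv; subst; auto.
  - cbn [has]. split.
    + intros (e & k & Hin & Hk & Hh). apply ty_S_combine in Hin as [He ->].
      apply cap_ge1 in Hk as (c & Hc & Hce); auto. subst e.
      apply IHn in Hh as (v & Hv & HQ). exists v; split; auto. apply desc_S; eauto.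
    + intros (v & Hv & HQ). apply desc_S in Hv as (c & Hc & Hv).
      exists (ty t dec n c), (cap t (fun c' => child u c' /\ ty t dec n c' = ty t dec n c)).
      split; [apply ty_S_combine; split; auto; apply ty_in_E; auto|].
      split; [apply cap_ge1; eauto|]. apply IHn; eauto.
Qed.

Fixpoint spl (t : nat) (Q1 Q2 : list nat -> Prop) (l n : nat) (tau : list nat) : Prop :=
  match n with
  | 0 => False
  | S m =>
    (l = S m /\ exists e1 k1 e2 k2,
        In (e1, k1) (combine (Efam E0 t m) tau) /\ In (e2, k2) (combine (Efam E0 t m) tau) /\
        has t Q1 m e1 /\ has t Q2 m e2 /\
        ((e1 <> e2 /\ 1 <= k1 /\ 1 <= k2) \/ (e1 = e2 /\ 2 <= k1)))
    \/ (l < S m /\ exists e k, In (e, k) (combine (Efam E0 t m) tau) /\ 1 <= k /\ spl t Q1 Q2 l m e)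
  end.

Definition splitsem n u l (Q1 Q2 : list nat -> Prop) (dec : tnode T -> list nat) :=
  exists v v', desc n u v /\ desc n u v' /\ Q1 (dec v) /\ Q2 (dec v') /\ 1 <= l <= n /\
    iter l v = iter l v' /\ iter (l - 1) v <> iter (l - 1) v'.

Lemma atleast2 {X} (P : X -> Prop) x y : P x -> P y -> x <> y -> atleast 2 P.
Proof.
  intros. exists [x; y]. split; [repeat constructor; simpl; intuition|].
  split; auto. intros z [<-|[<-|[]]]; auto.
Qed.

Lemma atleast2_inv {X} (P : X -> Prop) : atleast 2 P -> exists x y, P x /\ P y /\ x <> y.
Proof.
  intros ([|x [|y [|]]] & Hn & Hl & Hp); simpl in Hl; try lia.
  exists x, y. inversion Hn; subst. simpl in *. split; [auto|]. split; [auto|]. intros ->; auto.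
Qed.

Lemma spl_ty t dec Q1 Q2 l : 2 <= t -> (forall u, In (dec u) E0) ->
  forall n u, spl t Q1 Q2 l n (ty t dec n u) <-> splitsem n u l Q1 Q2 dec.
Proof.
  intros Ht Hd; induction n; intros u.
  - simpl; split; [tauto|]. intros (v & v' & _ & _ & _ & _ & ? & _); lia.
  - cbn [spl]. split.
    + intros [[-> (e1 & k1 & e2 & k2 & H1 & H2 & Hh1 & Hh2 & Hk)]
             |[Hl (e & k & Hin & Hk & Hs)]].
      * apply ty_S_combine in H1 as [He1 ->]. apply ty_S_combine in H2 as [He2 ->].
        assert (exists c1 c2, child u c1 /\ child u c2 /\ c1 <> c2 /\
                   ty t dec n c1 = e1 /\ ty t dec n c2 = e2) as (c1 & c2 & Hc1 & Hc2 & Hne & Ht1 & Ht2).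
        { destruct Hk as [(Hne & Hk1 & Hk2)|(<- & Hk)].
          - apply cap_ge1 in Hk1 as (c1 & ? & ?); [|lia]. apply cap_ge1 in Hk2 as (c2 & ? & ?); [|lia].
            exists c1, c2. split; [auto|]. split; [auto|]. split; [intros ->; congruence|]. auto.
          - apply (cap_atleast_iff t) in Hk; auto. apply atleast2_inv in Hk as (c1 & c2 & [? ?] & [? ?] & ?).
            exists c1, c2; intuition. }
        subst. apply (has_ty t dec Q1) in Hh1 as (v & Hv & Hq1); [|lia|auto].
        apply (has_ty t dec Q2) in Hh2 as (v' & Hv' & Hq2); [|lia|auto].
        exists v, v'. split; [apply desc_S; eauto|]. split; [apply desc_S; eauto|].
        repeat split; auto; try lia.
        -- rewrite !iter_S, (desc_iter _ _ _ Hv), (desc_iter _ _ _ Hv').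
           destruct Hc1 as [_ ->]; destruct Hc2 as [_ ->]; auto.
        -- replace (S n - 1) with n by lia. rewrite (desc_iter _ _ _ Hv), (desc_iter _ _ _ Hv'); auto.
      * apply ty_S_combine in Hin as [He ->]. apply cap_ge1 in Hk as (c & Hc & <-); [|lia].
        apply IHn in Hs as (v & v' & Hv & Hv' & Hq1 & Hq2 & Hl' & Hi & Hi').
        exists v, v'. split; [apply desc_S; eauto|]. split; [apply desc_S; eauto|].
        repeat split; auto; lia.
    + intros (v & v' & Hv & Hv' & Hq1 & Hq2 & Hl & Hi & Hi').
      apply desc_S in Hv as (c1 & Hc1 & Hv). apply desc_S in Hv' as (c2 & Hc2 & Hv').
      destruct (Nat.eq_dec l (S n)) as [->|Hne].
      * left. split; auto. replace (S n - 1) with n in Hi' by lia.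
        rewrite (desc_iter _ _ _ Hv), (desc_iter _ _ _ Hv') in Hi'.
        exists (ty t dec n c1), (cap t (fun c => child u c /\ ty t dec n c = ty t dec n c1)),
               (ty t dec n c2), (cap t (fun c => child u c /\ ty t dec n c = ty t dec n c2)).
        split; [apply ty_S_combine; split; auto; apply ty_in_E; auto|].
        split; [apply ty_S_combine; split; auto; apply ty_in_E; auto|].
        split; [apply has_ty; [lia|auto|]; eauto|].
        split; [apply has_ty; [lia|auto|]; eauto|].
        destruct (list_eq_dec Nat.eq_dec (ty t dec n c1) (ty t dec n c2)) as [Heq|Hneq].
        -- right; split; auto. apply cap_max; auto. apply atleast2 with c1 c2; auto.
        -- left; split; auto. split; apply cap_ge1; try lia; eauto.
      * right. split; [lia|].
        assert (c1 = c2) as <-.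
        { rewrite <- (desc_iter _ _ _ Hv), <- (desc_iter _ _ _ Hv').
          replace n with ((n - l) + l) by lia. rewrite !iter_add, Hi; auto. }
        exists (ty t dec n c1), (cap t (fun c => child u c /\ ty t dec n c = ty t dec n c1)).
        split; [apply ty_S_combine; split; auto; apply ty_in_E; auto|].
        split; [apply cap_ge1; eauto; lia|].
        apply IHn. exists v, v'; split; [auto|]; split; [auto|]; split; [auto|]; split; [auto|]; split; [lia|]; split; auto.
Qed.

End Trees.

Definition FC {X Y} t' (Yf : Y -> Prop) (Xf : X -> Prop) (g : Y -> X) :=
  (atleast t' Yf /\ atleast t' Xf) \/
  ((forall y, Yf y -> Xf (g y)) /\ (forall y y', Yf y -> Yf y' -> g y = g y' -> y = y') /\
   (forall x, Xf x -> exists y, Yf y /\ g y = x)).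

Definition gpr {X Y} (pr : list (Y * X)) (x0 : X) (y : Y) : X :=
  match excluded_middle_informative (exists x, In (y, x) pr) with
  | left H => proj1_sig (constructive_indefinite_description _ H)
  | right _ => x0
  end.

Lemma keys_unique {X Y} (pr : list (Y * X)) y x x' :
  NoDup (map fst pr) -> In (y, x) pr -> In (y, x') pr -> x = x'.
Proof.
  induction pr as [|[a b] pr IH]; simpl; [tauto|]. intros Hn H1 H2. inversion Hn; subst.
  destruct H1 as [H1|H1]; destruct H2 as [H2|H2]; try congruence.
  - inversion H1; subst. exfalso; apply H3. apply in_map_iff; exists (y, x'); auto.
  - inversion H2; subst. exfalso; apply H3. apply in_map_iff; exists (y, x); auto.
  - eauto.
Qed.

Lemma vals_unique {X Y} (pr : list (Y * X)) y y' x :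
  NoDup (map snd pr) -> In (y, x) pr -> In (y', x) pr -> y = y'.
Proof.
  induction pr as [|[a b] pr IH]; simpl; [tauto|]. intros Hn H1 H2. inversion Hn; subst.
  destruct H1 as [H1|H1]; destruct H2 as [H2|H2]; try congruence.
  - inversion H1; subst. exfalso; apply H3. apply in_map_iff; exists (y', x); auto.
  - inversion H2; subst. exfalso; apply H3. apply in_map_iff; exists (y, x); auto.
  - eauto.
Qed.

Lemma gpr_in {X Y} (pr : list (Y * X)) x0 y x : NoDup (map fst pr) -> In (y, x) pr -> gpr pr x0 y = x.
Proof.
  intros Hn Hin. unfold gpr. destruct excluded_middle_informative as [H|H].
  - destruct constructive_indefinite_description as [x' Hx']; simpl. eapply keys_unique; eauto.
  - exfalso; eauto.
Qed.

Lemma gpr_out {X Y} (pr : list (Y * X)) x0 y : ~ (exists x, In (y, x) pr) -> gpr pr x0 y = x0.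
Proof. intros H; unfold gpr; destruct excluded_middle_informative; tauto. Qed.

Lemma combine_full {X Y} (l1 : list Y) (l2 : list X) : length l1 = length l2 ->
  map fst (combine l1 l2) = l1 /\ map snd (combine l1 l2) = l2.
Proof.
  revert l2; induction l1 as [|a l1 IH]; intros [|b l2]; simpl; intros H; try lia; try (split; reflexivity).
  destruct (IH l2) as [H1 H2]; [lia|]. rewrite H1, H2; auto.
Qed.

Lemma combine_ex_l {X Y} (l1 : list Y) (l2 : list X) y : length l1 = length l2 -> In y l1 ->
  exists x, In (y, x) (combine l1 l2).
Proof.
  intros Hl Hy. destruct (combine_full l1 l2 Hl) as [H1 _]. rewrite <- H1 in Hy.
  apply in_map_iff in Hy as ([a b] & Ha & Hin); simpl in Ha; subst; eauto.
Qed.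

Lemma combine_ex_r {X Y} (l1 : list Y) (l2 : list X) x : length l1 = length l2 -> In x l2 ->
  exists y, In (y, x) (combine l1 l2).
Proof.
  intros Hl Hy. destruct (combine_full l1 l2 Hl) as [_ H1]. rewrite <- H1 in Hy.
  apply in_map_iff in Hy as ([a b] & Ha & Hin); simpl in Ha; subst; eauto.
Qed.

Lemma length_flat_map_le {A B} (f : A -> list B) l b :
  (forall a, In a l -> length (f a) <= b) -> length (flat_map f l) <= length l * b.
Proof.
  induction l; simpl; intros H; auto. rewrite length_app. pose proof (H a (or_introl eq_refl)).
  assert (length (flat_map f l) <= length l * b) by (apply IHl; auto). lia.
Qed.

Lemma NoDup_app_disj {Z} (l1 l2 : list Z) a : NoDup (l1 ++ l2) -> In a l1 -> In a l2 -> False.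
Proof.
  induction l1 as [|b l1 IH]; simpl; [tauto|]. intros Hn H1 H2.
  inversion Hn as [|? ? Hb Hn']; subst. destruct H1 as [->|H1].
  - apply Hb; apply in_or_app; auto.
  - eauto.
Qed.

Lemma first_skip_disj {Z} (L : list Z) k k' y : NoDup L -> k <= k' -> In y (firstn k L) ->
  In y (skipn k' L) -> False.
Proof.
  intros Hn Hk H1 H2. rewrite <- (firstn_skipn k' L) in Hn.
  assert (In y (firstn k' L)).
  { replace k with (Nat.min k k') in H1 by lia. rewrite <- firstn_firstn in H1.
    eapply In_firstn'; eauto. }
  eapply NoDup_app_disj; eauto.
Qed.

Section Distr.
Context {X Y : Type} (x0 : X) (A : X -> Prop) (B : Y -> Prop) (nk : X -> list nat)
        (K0 : list (list nat)) (t t' : nat).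
Hypothesis HK : forall x, A x -> In (nk x) K0.
Hypothesis Ht : S (length K0 * t') <= t.
Hypothesis Ht' : 1 <= t'.
Hypothesis Hc : cap t A = cap t B.

Definition fib s x := A x /\ nk x = s.

Lemma distr_small : cap t A < t ->
  exists g : Y -> X, (forall y, B y -> A (g y)) /\
    forall s, FC t' (fun y => B y /\ nk (g y) = s) (fib s) g.
Proof.
  intros Hlt. destruct (cap_small_list t A Hlt) as (lA & HnA & HlA & HA).
  assert (cap t B < t) as HltB by lia.
  destruct (cap_small_list t B HltB) as (lB & HnB & HlB & HB).
  assert (Hlen : length lB = length lA) by lia.
  destruct (combine_full lB lA Hlen) as [Hf Hs].
  set (pr := combine lB lA) in *.
  assert (Hpr : forall y x, In (y, x) pr -> In y lB /\ In x lA).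
  { intros y x H; split; [eapply in_combine_l|eapply in_combine_r]; eauto. }
  exists (gpr pr x0).
  assert (HgB : forall y, B y -> In (y, gpr pr x0 y) pr).
  { intros y Hy. apply HB in Hy. destruct (combine_ex_l lB lA y Hlen Hy) as [x Hx].
    rewrite (gpr_in pr x0 y x); auto. rewrite Hf; auto. }
  split.
  - intros y Hy. apply HA. apply (Hpr y). auto.
  - intros s. right. split; [|split].
    + intros y [Hy Hs']. split; auto. apply HA, (Hpr y), HgB; auto.
    + intros y y' [Hy _] [Hy' _] He. apply (vals_unique pr y y' (gpr pr x0 y)).
      * rewrite Hs; auto.
      * apply HgB; auto.
      * rewrite He; apply HgB; auto.
    + intros x [Hx Hxs]. apply HA in Hx. destruct (combine_ex_r lB lA x Hlen Hx) as [y Hy].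
      exists y. assert (Hyb : B y) by (apply HB; apply (Hpr y x); auto).
      rewrite (gpr_in pr x0 y x); [split; [split; auto|auto] | rewrite Hf; auto | auto].
Qed.

Section Big.
Variable W : list nat -> list X.
Hypothesis HW1 : forall s, NoDup (W s).
Hypothesis HW2 : forall s, length (W s) = cap t' (fib s).
Hypothesis HW3 : forall s x, In x (W s) -> fib s x.

Fixpoint build (K : list (list nat)) (L : list Y) : list (Y * X) :=
  match K with
  | [] => []
  | s :: K' => combine (firstn (length (W s)) L) (W s) ++ build K' (skipn t' L)
  end.

Lemma build_spec K : NoDup K -> forall L, NoDup L -> length K * t' <= length L ->
  NoDup (map fst (build K L)) /\ NoDup (map snd (build K L)) /\
  (forall y x, In (y, x) (build K L) -> In y L /\ exists s, In s K /\ In x (W s)) /\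
  (forall s x, In s K -> In x (W s) -> exists y, In (y, x) (build K L)).
Proof.
  induction K as [|s K IH]; intros HnK L HnL HlL; simpl.
  - split; [constructor|]. split; [constructor|]. split; tauto.
  - inversion HnK as [|? ? Hns HnK']; subst. simpl in HlL.
    assert (HWs : length (W s) <= t') by (rewrite HW2; apply cap_le).
    assert (Hfl : length (firstn (length (W s)) L) = length (W s)) by (rewrite length_firstn; lia).
    destruct (combine_full _ _ Hfl) as [Hf1 Hf2].
    destruct (IH HnK' (skipn t' L)) as (IH1 & IH2 & IH3 & IH4).
    { apply NoDup_skipn'; auto. }
    { rewrite length_skipn; lia. }
    split; [|split; [|split]].
    + rewrite map_app, Hf1. apply NoDup_app; auto.
      * apply NoDup_firstn'; auto.
      * intros y Hy1 Hy2. apply in_map_iff in Hy2 as ([y' x] & Heq & Hin); simpl in Heq; subst y'.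
        apply IH3 in Hin as [Hin _]. exact (first_skip_disj L (length (W s)) t' y HnL HWs Hy1 Hin).
    + rewrite map_app, Hf2. apply NoDup_app; auto.
      intros x Hx1 Hx2. apply in_map_iff in Hx2 as ([y x'] & Heq & Hin); simpl in Heq; subst x'.
      apply IH3 in Hin as [_ (s' & Hs' & Hx')]. apply HW3 in Hx1. apply HW3 in Hx'.
      destruct Hx1 as [_ E1]; destruct Hx' as [_ E2]. subst; congruence.
    + intros y x Hin. apply in_app_or in Hin as [Hin|Hin].
      * split; [eapply In_firstn', in_combine_l; eauto|]. exists s; split; [left; auto|].
        eapply in_combine_r; eauto.
      * apply IH3 in Hin as [H1 (s' & H2 & H3)]. split; [eapply In_skipn'; eauto|].
        exists s'; split; [right|]; auto.
    + intros s' x [<-|Hs'] Hx.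
      * destruct (combine_ex_r _ _ x Hfl Hx) as [y Hy]. exists y; apply in_or_app; auto.
      * destruct (IH4 s' x Hs' Hx) as [y Hy]. exists y; apply in_or_app; auto.
Qed.
End Big.

Lemma small_in_list {Z} t0 (P : Z -> Prop) l x : cap t0 P < t0 -> NoDup l -> length l = cap t0 P ->
  (forall z, In z l -> P z) -> P x -> In x l.
Proof.
  intros Hlt Hn Hl Hp Hx. destruct (classic (In x l)) as [|Hni]; auto. exfalso.
  assert (atleast (S (cap t0 P)) P) as Ha.
  { exists (x :: l); split; [constructor; auto|]. split; simpl; [lia|]. intros y [<-|Hy]; auto. }
  apply (cap_max t0) in Ha; lia.
Qed.

Lemma distr_big : cap t A = t ->
  exists g : Y -> X, (forall y, B y -> A (g y)) /\
    forall s, FC t' (fun y => B y /\ nk (g y) = s) (fib s) g.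
Proof.
  intros HtA.
  assert (HW : forall s, exists l, NoDup l /\ length l = cap t' (fib s) /\ forall x, In x l -> fib s x)
    by (intros; apply cap_atleast).
  set (W := fun s => proj1_sig (constructive_indefinite_description _ (HW s))).
  assert (HW' : forall s, NoDup (W s) /\ length (W s) = cap t' (fib s) /\ forall x, In x (W s) -> fib s x).
  { intros s0; unfold W; destruct constructive_indefinite_description; simpl; auto. }
  assert (HW1 : forall s, NoDup (W s)) by (intros; apply HW').
  assert (HW2 : forall s, length (W s) = cap t' (fib s)) by (intros; apply HW').
  assert (HW3 : forall s x, In x (W s) -> fib s x) by (intros; apply HW'; auto).
  clearbody W. clear HW HW'.
  set (K := nodup (list_eq_dec Nat.eq_dec) K0).
  assert (HnK : NoDup K) by apply NoDup_nodup.
  assert (HKin : forall s, In s K <-> In s K0) by (intros; apply nodup_In).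
  assert (HlK : length K <= length K0).
  { apply NoDup_incl_length; auto. intros s Hs; apply HKin; auto. }
  assert (HaB : atleast t B).
  { pose proof (cap_atleast t B) as Hq. rewrite <- Hc, HtA in Hq. exact Hq. }
  destruct HaB as (L & HnL & HlL & HLB).
  destruct (build_spec W HW1 HW2 HW3 K HnK L HnL) as (S1 & S2 & S3 & S4).
  { rewrite HlL. nia. }
  set (pr := build W K L) in *.
  assert (Hs0 : exists s0, In s0 K /\ length (W s0) = t').
  { apply NNPP; intros Hno.
    assert (Hsm : forall s, In s K -> length (W s) <= t' - 1).
    { intros s Hs. assert (length (W s) <= t') by (rewrite HW2; apply cap_le).
      destruct (Nat.eq_dec (length (W s)) t'); [exfalso; eauto|lia]. }
    assert (HAin : forall x, A x -> In x (flat_map W K)).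
    { intros x Hx. apply in_flat_map. exists (nk x). split; [apply HKin; auto|].
      apply (small_in_list t' (fib (nk x))); auto.
      - rewrite <- HW2. pose proof (Hsm (nk x) (proj2 (HKin _) (HK x Hx))). lia.
      - split; auto. }
    destruct (cap_atleast t A) as (LA & HnA & HlA & HA). rewrite HtA in HlA.
    assert (length LA <= length (flat_map W K)).
    { apply NoDup_incl_length; auto. intros x Hx; apply HAin; auto. }
    pose proof (length_flat_map_le W K (t' - 1) Hsm). nia. }
  destruct Hs0 as (s0 & Hs0K & Hs0l).
  set (x0' := nth 0 (W s0) x0).
  assert (Hx0' : In x0' (W s0)) by (apply nth_In; lia).
  exists (gpr pr x0').
  assert (Hg : forall y, (exists x, In (y, x) pr /\ gpr pr x0' y = x) \/
                         (~ (exists x, In (y, x) pr) /\ gpr pr x0' y = x0')).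
  { intros y. destruct (classic (exists x, In (y, x) pr)) as [[x Hx]|Hn].
    - left; exists x; split; auto. apply gpr_in; auto.
    - right; split; auto. apply gpr_out; auto. }
  assert (HgA : forall y, A (gpr pr x0' y)).
  { intros y. destruct (Hg y) as [(x & Hx & ->)|[_ ->]].
    - apply S3 in Hx as [_ (s & _ & Hs)]. apply HW3 in Hs; apply Hs.
    - apply HW3 in Hx0'; apply Hx0'. }
  split; [intros; auto|]. intros s.
  destruct (classic (In s K /\ length (W s) = t')) as [[HsK Hsl]|Hsmall].
  - left. split.
    + apply atleast_surj with (P := fun x => In x (W s)) (g := gpr pr x0').
      * intros x Hx. destruct (S4 s x HsK Hx) as [y Hy]. exists y.
        rewrite (gpr_in pr x0' y x S1 Hy). split; auto. split; [apply HLB; apply (S3 y x Hy)|].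
        apply HW3 in Hx; apply Hx.
      * exists (W s); split; auto.
    + exists (W s); split; auto.
  - right. split; [|split].
    + intros y [_ Hy]. split; auto.
    + intros y y' [_ Hy] [_ Hy'] He.
      assert (Hpair : forall z, nk (gpr pr x0' z) = s -> In (z, gpr pr x0' z) pr).
      { intros z Hz. destruct (Hg z) as [(x & Hx & Hgx)|[_ Hgx]].
        - rewrite Hgx; auto.
        - exfalso. apply Hsmall. rewrite Hgx in Hz. apply HW3 in Hx0'.
          destruct Hx0' as [_ E]. rewrite <- Hz, E. auto. }
      apply (vals_unique pr y y' (gpr pr x0' y)); auto.
      rewrite He; auto.
    + intros x [Hx Hxs].
      assert (HsK : In s K) by (apply HKin; subst s; apply HK; auto).
      assert (Hlt : cap t' (fib s) < t').
      { rewrite <- HW2. assert (length (W s) <= t') by (rewrite HW2; apply cap_le).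
        destruct (Nat.eq_dec (length (W s)) t'); [exfalso; auto|lia]. }
      assert (In x (W s)) as Hxw.
      { apply (small_in_list t' (fib s)); auto. split; auto. }
      destruct (S4 s x HsK Hxw) as [y Hy]. exists y.
      rewrite (gpr_in pr x0' y x S1 Hy). split; auto. split; auto. apply HLB; apply (S3 y x Hy).
Qed.

Lemma distr :
  exists g : Y -> X, (forall y, B y -> A (g y)) /\
    forall s, FC t' (fun y => B y /\ nk (g y) = s) (fib s) g.
Proof.
  pose proof (cap_le t A). destruct (Nat.eq_dec (cap t A) t).
  - apply distr_big; auto.
  - apply distr_small; lia.
Qed.
End Distr.

Lemma union_FC {X Y} t' (A : X -> Prop) (B : Y -> Prop) (kA : X -> list nat) (kB : Y -> list nat)
  (nk : X -> list nat) (g : Y -> X) s :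
  (forall y, B y -> A (g y) /\ kA (g y) = kB y) ->
  (forall e, FC t' (fun y => (B y /\ kB y = e) /\ nk (g y) = s) (fun x => (A x /\ kA x = e) /\ nk x = s) g) ->
  cap t' (fun y => B y /\ nk (g y) = s) = cap t' (fun x => A x /\ nk x = s).
Proof.
  intros H1 H2.
  destruct (classic (exists e, atleast t' (fun y => (B y /\ kB y = e) /\ nk (g y) = s) /\
                               atleast t' (fun x => (A x /\ kA x = e) /\ nk x = s))) as [(e & Ha & Hb)|Hno].
  - rewrite !cap_big; auto.
    + eapply atleast_imp; [|exact Hb]. simpl; tauto.
    + eapply atleast_imp; [|exact Ha]. simpl; tauto.
  - assert (Hbij : forall e, let Yf := (fun y => (B y /\ kB y = e) /\ nk (g y) = s) in
                             let Xf := (fun x => (A x /\ kA x = e) /\ nk x = s) in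
      (forall y, Yf y -> Xf (g y)) /\ (forall y y', Yf y -> Yf y' -> g y = g y' -> y = y') /\
      (forall x, Xf x -> exists y, Yf y /\ g y = x)).
    { intros e. destruct (H2 e) as [Hb|Hb]; auto. exfalso; apply Hno; eauto. }
    apply cap_bij with g.
    + intros y [Hy Hs]. split; auto. apply H1; auto.
    + intros y y' [Hy Hs] [Hy' Hs'] He.
      assert (Hk : kB y' = kB y).
      { rewrite <- (proj2 (H1 y' Hy')), <- (proj2 (H1 y Hy)), He; auto. }
      destruct (Hbij (kB y)) as (_ & Hi & _). apply Hi; auto.
    + intros x [Hx Hs]. destruct (Hbij (kA x)) as (_ & _ & Hsu).
      destruct (Hsu x) as (y & [[Hy _] Hys] & Hg); auto. eauto.
Qed.

Lemma FC_ext {X Y} t' (Bf : Y -> Prop) (Xf : X -> Prop) (nk : X -> list nat) (g g' : Y -> X) s :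
  (forall y, Bf y -> g y = g' y) ->
  FC t' (fun y => Bf y /\ nk (g' y) = s) Xf g' -> FC t' (fun y => Bf y /\ nk (g y) = s) Xf g.
Proof.
  intros He [[H1 H2]|(H1 & H2 & H3)].
  - left; split; auto. eapply atleast_imp; [|exact H1]. intros y [Hy Hs]; split; auto. rewrite He; auto.
  - right. split; [|split].
    + intros y [Hy Hs]. rewrite He; auto. apply H1. split; auto. rewrite <- He; auto.
    + intros y y' [Hy Hs] [Hy' Hs'] Heq. apply H2; auto.
      * split; auto; rewrite <- He; auto.
      * split; auto; rewrite <- He; auto.
      * rewrite <- !He; auto.
    + intros x Hx. destruct (H3 x Hx) as (y & [Hy Hs] & Hg). exists y. rewrite He; auto.
Qed.

Definition setbit {N} (i : nat) (P : N -> Prop) (d : N -> list nat) (u : N) : list nat :=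
  map (fun k => if Nat.eqb k i then bP (P u) else nth k (d u) 0) (seq 0 (length (d u))).

Lemma setbit_good {N} L R i (P : N -> Prop) d : 1 <= R -> (forall u, In (d u) (all_lists L R)) ->
  forall u, In (setbit i P d u) (all_lists L R).
Proof.
  intros HR Hd u. specialize (Hd u). apply all_lists_spec in Hd as [Hl Hb].
  apply all_lists_spec. unfold setbit. rewrite length_map, length_seq. split; auto.
  intros x Hx. apply in_map_iff in Hx as (k & <- & Hk). apply in_seq in Hk.
  destruct (Nat.eqb k i). - pose proof (bP_le1 (P u)); lia. - apply Hb, nth_In; lia.
Qed.

Lemma setbit_ext {N} i (P P' : N -> Prop) d u : (P u <-> P' u) -> setbit i P d u = setbit i P' d u.
Proof.
  intros H. unfold setbit. apply map_ext; intros k. destruct (Nat.eqb k i); auto.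
  unfold bP. do 2 destruct excluded_middle_informative; tauto.
Qed.

Lemma map_eq_in {A' B'} (f g : A' -> B') l a : map f l = map g l -> In a l -> f a = g a.
Proof.
  induction l; simpl; [tauto|]. intros H [->|Hin]; inversion H; auto.
Qed.

Lemma cap_empty {X} t (P : X -> Prop) : (forall x, ~ P x) -> cap t P = 0.
Proof.
  intros H. destruct (cap_atleast t P) as ([|x l] & _ & Hl & Hp); simpl in Hl; auto.
  exfalso; apply (H x); apply Hp; simpl; auto.
Qed.

Section Refine.
Variables (T1 T2 : rtree) (L R i t t' : nat).
Hypothesis HR : 1 <= R.
Hypothesis Ht' : 1 <= t'.
Let E0 := all_lists L R.

Lemma refine n : (forall m, m < n -> S (length (Efam E0 t' m) * t') <= t) ->
  forall d1 d2, (forall u, In (d1 u) E0) -> (forall u, In (d2 u) E0) ->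
  forall u1 u2, ty T1 E0 t d1 n u1 = ty T2 E0 t d2 n u2 ->
  forall P1, exists P2, ty T1 E0 t' (setbit i P1 d1) n u1 = ty T2 E0 t' (setbit i P2 d2) n u2.
Proof.
  intros Hth d1 d2 Hd1 Hd2. induction n; intros u1 u2 Heq P1.
  - exists (fun _ => P1 u1). simpl in *. unfold setbit. rewrite Heq. reflexivity.
  - cbn [ty] in Heq.
    assert (Hcap : forall e, cap t (fun c => child T1 u1 c /\ ty T1 E0 t d1 n c = e) =
                             cap t (fun c => child T2 u2 c /\ ty T2 E0 t d2 n c = e)).
    { intros e. destruct (classic (In e (Efam E0 t n))) as [He|He].
      - exact (map_eq_in _ _ _ _ Heq He).
      - rewrite !cap_empty; auto.
        + intros c [_ Hc]. apply He; rewrite <- Hc; apply ty_in_E; auto.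
        + intros c [_ Hc]. apply He; rewrite <- Hc; apply ty_in_E; auto. }
    set (new1 := fun c => ty T1 E0 t' (setbit i P1 d1) n c).
    set (K := Efam E0 t' n).
    assert (HD : forall e, exists g : tnode T2 -> tnode T1,
      (forall y, (child T2 u2 y /\ ty T2 E0 t d2 n y = e) -> (child T1 u1 (g y) /\ ty T1 E0 t d1 n (g y) = e)) /\
      forall s, FC t' (fun y => (child T2 u2 y /\ ty T2 E0 t d2 n y = e) /\ new1 (g y) = s)
                      (fib (fun c => child T1 u1 c /\ ty T1 E0 t d1 n c = e) new1 s) g).
    { intros e. apply (distr (troot T1) (fun c => child T1 u1 c /\ ty T1 E0 t d1 n c = e)
       (fun c => child T2 u2 c /\ ty T2 E0 t d2 n c = e) new1 K t t').
      - intros x _. apply ty_in_E. apply setbit_good; auto.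
      - apply Hth; lia.
      - auto.
      - apply Hcap. }
    set (G := fun e => proj1_sig (constructive_indefinite_description _ (HD e))).
    assert (HG : forall e, (forall y, (child T2 u2 y /\ ty T2 E0 t d2 n y = e) -> (child T1 u1 (G e y) /\ ty T1 E0 t d1 n (G e y) = e)) /\
      forall s, FC t' (fun y => (child T2 u2 y /\ ty T2 E0 t d2 n y = e) /\ new1 (G e y) = s)
                      (fib (fun c => child T1 u1 c /\ ty T1 E0 t d1 n c = e) new1 s) (G e)).
    { intros e. unfold G. destruct constructive_indefinite_description; simpl; auto. }
    clearbody G. clear HD.
    set (g := fun c => G (ty T2 E0 t d2 n c) c).
    assert (Hg1 : forall c, child T2 u2 c -> child T1 u1 (g c) /\ ty T1 E0 t d1 n (g c) = ty T2 E0 t d2 n c).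
    { intros c Hc. apply (proj1 (HG _)). auto. }
    assert (HP : forall c, exists P, child T2 u2 c -> new1 (g c) = ty T2 E0 t' (setbit i P d2) n c).
    { intros c. destruct (classic (child T2 u2 c)) as [Hc|Hc].
      - destruct (IHn (fun m Hm => Hth m (Nat.lt_lt_succ_r _ _ Hm)) (g c) c (proj2 (Hg1 c Hc)) P1) as [P HPc].
        exists P; auto.
      - exists (fun _ => False); tauto. }
    set (Pc := fun c => proj1_sig (constructive_indefinite_description _ (HP c))).
    assert (HPc : forall c, child T2 u2 c -> new1 (g c) = ty T2 E0 t' (setbit i (Pc c) d2) n c).
    { intros c; unfold Pc; destruct constructive_indefinite_description; simpl; auto. }
    clearbody Pc. clear HP.
    exists (fun w => Pc (iter T2 n w) w).
    cbn [ty]. apply map_ext. intros s.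
    transitivity (cap t' (fun c => child T2 u2 c /\ new1 (g c) = s)).
    + symmetry. apply (union_FC t' (child T1 u1) (child T2 u2) (ty T1 E0 t d1 n) (ty T2 E0 t d2 n) new1 g s).
      * auto.
      * intros e. apply FC_ext with (g' := G e).
        -- intros y [_ Hy]. unfold g; rewrite Hy; auto.
        -- apply (proj2 (HG e)).
    + apply cap_ext. intros c. split; intros [Hc Hs]; split; auto; rewrite <- Hs.
      * rewrite (HPc c Hc). apply ty_local. intros v Hv. apply setbit_ext.
        rewrite (desc_iter _ _ _ _ Hv); tauto.
      * rewrite (HPc c Hc). symmetry. apply ty_local. intros v Hv. apply setbit_ext.
        rewrite (desc_iter _ _ _ _ Hv); tauto.
Qed.
End Refine.

Section Dist.
Variable T : rtree.

Lemma tedge_sym x y : tedge T x y -> tedge T y x.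
Proof. unfold tedge; tauto. Qed.

Lemma twalk_app x y z a b : twalk T x y a -> twalk T y z b -> twalk T x z (a + b).
Proof. induction 1; simpl; auto. intros H'. econstructor; eauto. Qed.

Lemma twalk_snoc x y z n : twalk T x y n -> tedge T y z -> twalk T x z (S n).
Proof.
  intros H He. replace (S n) with (n + 1) by lia. eapply twalk_app; eauto.
  econstructor; eauto. constructor.
Qed.

Lemma twalk_rev x y n : twalk T x y n -> twalk T y x n.
Proof.
  induction 1; [constructor|]. eapply twalk_snoc; eauto. apply tedge_sym; auto.
Qed.


Lemma walk_up j v : j <= tdepth T v -> twalk T v (iter T j v) j.
Proof.
  induction j; intros Hj; [constructor|].
  eapply twalk_snoc; [apply IHj; lia|]. rewrite iter_S. left. split; auto.
  intros He. pose proof (iter_depth T j v) as Hd. rewrite He, tdepth_root in Hd. lia.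
Qed.

Definition anc k x := iter T (tdepth T x - k) x.

Lemma anc_self x : anc (tdepth T x) x = x.
Proof. unfold anc. rewrite Nat.sub_diag. reflexivity. Qed.

Lemma anc_par k x : x <> troot T -> k <= tdepth T (tpar T x) -> anc k (tpar T x) = anc k x.
Proof.
  intros Hn Hk. unfold anc. rewrite (depth_nonroot T x Hn).
  replace (S (tdepth T (tpar T x)) - k) with ((tdepth T (tpar T x) - k) + 1) by lia.
  rewrite iter_add. reflexivity.
Qed.

Lemma tedge_depth x y : tedge T x y ->
  (x <> troot T /\ y = tpar T x /\ tdepth T x = S (tdepth T y)) \/
  (y <> troot T /\ x = tpar T y /\ tdepth T y = S (tdepth T x)).
Proof.
  intros [[Hx ->]|[Hy ->]].
  - left; repeat split; auto. apply depth_nonroot; auto.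
  - right; repeat split; auto. apply depth_nonroot; auto.
Qed.

Lemma walk_depth x y m : twalk T x y m -> tdepth T y <= tdepth T x + m.
Proof.
  induction 1; [lia|]. apply tedge_depth in H as [(_ & _ & H)|(_ & _ & H)]; lia.
Qed.

Lemma walk_lb x y m : twalk T x y m -> forall k, k <= tdepth T x -> k <= tdepth T y ->
  anc k x <> anc k y -> tdepth T x + tdepth T y + 2 <= m + 2 * k.
Proof.
  induction 1 as [x|x y z n He Hw IH]; intros k Hk1 Hk2 Hne; [tauto|].
  apply tedge_depth in He as [(Hx & -> & Hd)|(Hy & -> & Hd)].
  - destruct (Nat.eq_dec k (tdepth T x)) as [->|Hkx].
    + pose proof (walk_depth _ _ _ Hw). lia.
    + assert (k <= tdepth T (tpar T x)) by lia.
      rewrite <- (anc_par k x Hx) in Hne by auto.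
      specialize (IH k H Hk2 Hne). lia.
  - assert (Hk : k <= tdepth T (tpar T y)) by lia.
    rewrite (anc_par k y Hy Hk) in Hne.
    specialize (IH k ltac:(lia) Hk2 Hne). lia.
Qed.

Lemma tdist_unique x y n n' : tdist T x y n -> tdist T x y n' -> n = n'.
Proof. intros [H1 H2] [H3 H4]. apply Nat.le_antisymm; auto. Qed.

Lemma split_tdist a b D l : tdepth T a = D -> tdepth T b = D -> 1 <= l <= D ->
  iter T l a = iter T l b -> iter T (l - 1) a <> iter T (l - 1) b -> tdist T a b (2 * l).
Proof.
  intros Ha Hb Hl Hi Hi'. split.
  - replace (2 * l) with (l + l) by lia. eapply twalk_app; [apply walk_up; lia|].
    rewrite Hi. apply twalk_rev, walk_up; lia.
  - intros m Hm. assert (HH := walk_lb _ _ _ Hm (D - l + 1) ltac:(lia) ltac:(lia)).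
    unfold anc in HH. rewrite Ha, Hb in HH. replace (D - (D - l + 1)) with (l - 1) in HH by lia.
    specialize (HH Hi'). lia.
Qed.

Lemma exists_split a b D : tdepth T a = D -> tdepth T b = D -> a <> b ->
  exists l, 1 <= l <= D /\ iter T l a = iter T l b /\ iter T (l - 1) a <> iter T (l - 1) b.
Proof.
  intros Ha Hb Hne.
  assert (HD : iter T D a = iter T D b).
  { rewrite <- Ha at 1. rewrite iter_root. rewrite <- Hb. rewrite iter_root. auto. }
  assert (forall j, j <= D -> iter T j a = iter T j b ->
            exists l, 1 <= l <= j /\ iter T l a = iter T l b /\ iter T (l - 1) a <> iter T (l - 1) b) as Hg.
  { induction j; intros Hj He. { simpl in He; tauto. }
    destruct (classic (iter T j a = iter T j b)) as [He'|He'].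
    - destruct (IHj ltac:(lia) He') as (l & ? & ? & ?). exists l; split; [lia|auto].
    - exists (S j); split; [lia|]. split; auto. replace (S j - 1) with j by lia. auto. }
  destruct (Hg D (le_n _) HD) as (l & ? & ? & ?). exists l; auto.
Qed.

Lemma tdist_split a b D l : tdepth T a = D -> tdepth T b = D -> 1 <= l ->
  (tdist T a b (2 * l) <-> (1 <= l <= D /\ iter T l a = iter T l b /\ iter T (l - 1) a <> iter T (l - 1) b)).
Proof.
  intros Ha Hb Hl. split.
  - intros Hd. assert (a <> b) as Hne.
    { intros ->. destruct Hd as [_ Hm]. specialize (Hm 0 (twalk_nil _ _)). lia. }
    destruct (exists_split a b D Ha Hb Hne) as (l' & H1 & H2 & H3).
    pose proof (split_tdist a b D l' Ha Hb H1 H2 H3) as Hd'.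
    pose proof (tdist_unique _ _ _ _ Hd Hd'). assert (l = l') by lia. subst; auto.
  - intros (H1 & H2 & H3). eapply split_tdist; eauto.
Qed.
End Dist.

Lemma bP_ext P Q : (P <-> Q) -> bP P = bP Q.
Proof. intros H; unfold bP; do 2 destruct excluded_middle_informative; tauto. Qed.

Lemma nth_map_seq (f : nat -> nat) n k : k < n -> nth k (map f (seq 0 n)) 0 = f k.
Proof.
  intros Hk. rewrite nth_indep with (d' := f 0) by (rewrite length_map, length_seq; auto).
  rewrite map_nth, seq_nth; auto.
Qed.

Lemma sig_eq {A} {P : A -> Prop} (x y : {a : A | P a}) : proj1_sig x = proj1_sig y -> x = y.
Proof. destruct x, y; simpl; intros ->; f_equal; apply proof_irrelevance. Qed.

Section TMG.
Variables (r d : nat) (M : tree_model r d) (B : nat).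
Let T := tm_tree M.
Let V := gV (tm_graph M).

Lemma leaf_depth x : is_leaf T x -> tdepth T x = d.
Proof. apply tm_leaf_depth. Qed.

Lemma depth_leaf x : tdepth T x = d -> is_leaf T x.
Proof.
  intros Hx y Hy Hp. pose proof (tm_depth_le _ _ M y) as H.
  fold T in H. rewrite (depth_nonroot T y Hy), Hp in H. lia.
Qed.

Lemma desc_root_leaf v : desc T d (troot T) v <-> is_leaf T v.
Proof.
  split.
  - intros [_ H]. apply depth_leaf. rewrite H, tdepth_root; lia.
  - intros H. pose proof (leaf_depth v H) as Hd. rewrite <- Hd. apply desc_root.
Qed.

Definition ent (rho : nat -> option V) (sg : nat -> V -> Prop) (k : nat) (u : tnode T) : nat :=
  match k with
  | 0 => tm_lab M u
  | S k' => if k' <? B then bP (exists a, rho k' = Some a /\ proj1_sig a = u)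
            else bP (exists h : is_leaf T u, sg (k' - B) (exist _ u h))
  end.

Definition decp rho sg (u : tnode T) : list nat := map (fun k => ent rho sg k u) (seq 0 (S (B + B))).

Definition E0 := all_lists (S (B + B)) (S r).

Lemma lab_le u : tm_lab M u <= S r.
Proof.
  destruct (classic (is_leaf T u)) as [H|H].
  - pose proof (tm_lab_leaf _ _ M u H); lia.
  - rewrite (tm_lab_internal _ _ M u H); lia.
Qed.

Lemma decp_good rho sg u : In (decp rho sg u) E0.
Proof.
  apply all_lists_spec. unfold decp. rewrite length_map, length_seq. split; auto.
  intros x Hx. apply in_map_iff in Hx as (k & <- & _). destruct k; simpl.
  - apply lab_le.
  - destruct (k <? B); pose proof (bP_le1 (exists a, rho k = Some a /\ proj1_sig a = u));
    pose proof (bP_le1 (exists h : is_leaf T u, sg (k - B) (exist _ u h))); lia.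
Qed.

Lemma decp_nth rho sg k u : k < S (B + B) -> nth k (decp rho sg u) 0 = ent rho sg k u.
Proof. intros; unfold decp; apply (nth_map_seq (fun k => ent rho sg k u)); auto. Qed.

Lemma decp_lab rho sg u : nth 0 (decp rho sg u) 0 = tm_lab M u.
Proof. rewrite decp_nth by lia. reflexivity. Qed.

Lemma decp_bit_rho rho sg x u : x < B ->
  (nth (S x) (decp rho sg u) 0 = 1 <-> exists a, rho x = Some a /\ proj1_sig a = u).
Proof.
  intros Hx. rewrite decp_nth by lia. simpl. replace (x <? B) with true by (symmetry; apply Nat.ltb_lt; auto).
  apply bP_1.
Qed.

Lemma decp_bit_sg rho sg X u : X < B ->
  (nth (S (B + X)) (decp rho sg u) 0 = 1 <-> exists h : is_leaf T u, sg X (exist _ u h)).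
Proof.
  intros Hx. rewrite decp_nth by lia. simpl. replace (B + X <? B) with false by (symmetry; apply Nat.ltb_ge; lia).
  replace (B + X - B) with X by lia. apply bP_1.
Qed.

Lemma decp_upd rho sg x v u : x < B ->
  decp (upd rho x v) sg u = setbit (S x) (fun w => proj1_sig v = w) (decp rho sg) u.
Proof.
  intros Hx. unfold setbit. replace (length (decp rho sg u)) with (S (B + B))
    by (unfold decp; rewrite length_map, length_seq; auto).
  unfold decp at 1. apply map_ext_in. intros k Hk. apply in_seq in Hk.
  destruct (Nat.eqb k (S x)) eqn:E.
  - apply Nat.eqb_eq in E; subst k. simpl. replace (x <? B) with true by (symmetry; apply Nat.ltb_lt; auto).
    apply bP_ext. unfold upd. rewrite Nat.eqb_refl. split.
    + intros (a & Ha & <-). inversion Ha; auto.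
    + intros <-. eauto.
  - rewrite decp_nth by lia. destruct k; simpl; auto. destruct (k <? B); auto.
    apply bP_ext. unfold upd. assert (Nat.eqb k x = false) as ->; [|tauto].
    apply Nat.eqb_neq. intros ->. rewrite Nat.eqb_refl in E; discriminate.
Qed.

Lemma decp_supd rho sg X P u : X < B ->
  decp rho (supd sg X P) u = setbit (S (B + X)) (fun w => exists h : is_leaf T w, P (exist _ w h)) (decp rho sg) u.
Proof.
  intros Hx. unfold setbit. replace (length (decp rho sg u)) with (S (B + B))
    by (unfold decp; rewrite length_map, length_seq; auto).
  unfold decp at 1. apply map_ext_in. intros k Hk. apply in_seq in Hk.
  destruct (Nat.eqb k (S (B + X))) eqn:E.
  - apply Nat.eqb_eq in E; subst k. simpl. replace (B + X <? B) with false by (symmetry; apply Nat.ltb_ge; lia).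
    apply bP_ext. unfold supd. replace (B + X - B) with X by lia. rewrite Nat.eqb_refl. tauto.
  - rewrite decp_nth by lia. destruct k; simpl; auto. destruct (k <? B) eqn:E2; auto.
    apply bP_ext. unfold supd. assert (Nat.eqb (k - B) X = false) as ->; [|tauto].
    apply Nat.eqb_neq. apply Nat.ltb_ge in E2. intros Heq. apply Nat.eqb_neq in E. lia.
Qed.

Lemma leaf_of_V (a : V) : is_leaf T (proj1_sig a).
Proof. exact (proj2_sig a). Qed.

Section Atomic.
Variables (t : nat) (Ht : 2 <= t) (rho : nat -> option V) (sg : nat -> V -> Prop).
Let dec := decp rho sg.
Let tau := ty T E0 t dec d (troot T).

Lemma dec_good : forall u, In (dec u) E0.
Proof. intros; apply decp_good. Qed.

Lemma at_eq x y : x < B -> y < B ->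
  (atom2 (@eq V) rho x y <-> has E0 t (fun tt => nth (S x) tt 0 = 1 /\ nth (S y) tt 0 = 1) d tau).
Proof.
  intros Hx Hy. unfold tau. rewrite has_ty; [|lia|apply dec_good]. unfold atom2, dec. split.
  - destruct (rho x) as [a|] eqn:Ea; [|tauto]. destruct (rho y) as [b|] eqn:Eb; [|tauto].
    intros <-. exists (proj1_sig a). split; [apply desc_root_leaf, leaf_of_V|].
    rewrite !decp_bit_rho by auto. split; eauto.
  - intros (v & _ & H1 & H2). apply decp_bit_rho in H1 as (a & Ha & Hav); auto.
    apply decp_bit_rho in H2 as (b & Hb & Hbv); auto. rewrite Ha, Hb. apply sig_eq; congruence.
Qed.

Lemma at_in x X : x < B -> X < B ->
  ((match rho x with Some a => sg X a | None => False end) <->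
   has E0 t (fun tt => nth (S x) tt 0 = 1 /\ nth (S (B + X)) tt 0 = 1) d tau).
Proof.
  intros Hx HX. unfold tau. rewrite has_ty; [|lia|apply dec_good]. unfold dec. split.
  - destruct (rho x) as [a|] eqn:Ea; [|tauto]. intros Ha.
    exists (proj1_sig a). split; [apply desc_root_leaf, leaf_of_V|].
    rewrite decp_bit_rho, decp_bit_sg by auto. split; eauto.
    exists (proj2_sig a). destruct a; simpl; auto.
  - intros (v & _ & H1 & H2). apply decp_bit_rho in H1 as (a & Ha & Hav); auto.
    apply decp_bit_sg in H2 as (h & Hh); auto. rewrite Ha.
    replace a with (exist (fun x => is_leaf T x) v h); auto. apply sig_eq; simpl; auto.
Qed.

Lemma at_adj x y : x < B -> y < B ->
  (atom2 (gE (tm_graph M)) rho x y <->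
   exists l i j, tm_S M i j l /\
     spl E0 t (fun tt => nth (S x) tt 0 = 1 /\ nth 0 tt 0 = i)
              (fun tt => nth (S y) tt 0 = 1 /\ nth 0 tt 0 = j) l d tau).
Proof.
  intros Hx Hy. unfold tau. unfold atom2. split.
  - destruct (rho x) as [a|] eqn:Ea; [|tauto]. destruct (rho y) as [b|] eqn:Eb; [|tauto].
    simpl. intros (l & Hd & HS).
    pose proof (tm_S_range _ _ M _ _ _ HS) as (_ & _ & Hl).
    exists l, (tm_lab M (proj1_sig a)), (tm_lab M (proj1_sig b)). split; auto.
    rewrite spl_ty; [|auto|apply dec_good].
    apply (tdist_split T _ _ d l (leaf_depth _ (leaf_of_V a)) (leaf_depth _ (leaf_of_V b))) in Hd; [|lia].
    destruct Hd as (Hl' & Hi & Hi').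
    exists (proj1_sig a), (proj1_sig b). unfold dec.
    split; [apply desc_root_leaf, leaf_of_V|]. split; [apply desc_root_leaf, leaf_of_V|].
    rewrite !decp_bit_rho, !decp_lab by auto.
    split; [split; eauto|]. split; [split; eauto|]. auto.
  - intros (l & i & j & HS & Hs). rewrite spl_ty in Hs; [|auto|apply dec_good].
    destruct Hs as (v & v' & Hv & Hv' & [H1 L1] & [H2 L2] & Hl & Hi & Hi').
    unfold dec in *. rewrite decp_lab in L1, L2.
    apply decp_bit_rho in H1 as (a & Ha & <-); auto.
    apply decp_bit_rho in H2 as (b & Hb & <-); auto. rewrite Ha, Hb. simpl.
    exists l. split; [|subst; auto].
    apply (tdist_split T _ _ d l (leaf_depth _ (leaf_of_V a)) (leaf_depth _ (leaf_of_V b))); [lia|].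
    auto.
Qed.
End Atomic.
End TMG.

Fixpoint mrank (p : mso) : nat :=
  match p with
  | MNot a => mrank a
  | MAnd a b | MOr a b | MImp a b => Nat.max (mrank a) (mrank b)
  | MEx _ a | MAll _ a | MExS _ a | MAllS _ a => S (mrank a)
  | _ => 0
  end.

Fixpoint mvars (B : nat) (p : mso) : Prop :=
  match p with
  | MEq x y | MAdj x y => x < B /\ y < B
  | MIn x X => x < B /\ X < B
  | MTrue | MFalse => True
  | MNot a => mvars B a
  | MAnd a b | MOr a b | MImp a b => mvars B a /\ mvars B b
  | MEx x a | MAll x a => x < B /\ mvars B a
  | MExS X a | MAllS X a => X < B /\ mvars B a
  end.

Fixpoint mmax (p : mso) : nat :=
  match p with
  | MEq x y | MAdj x y | MIn x y => Nat.max x y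
  | MTrue | MFalse => 0
  | MNot a => mmax a
  | MAnd a b | MOr a b | MImp a b => Nat.max (mmax a) (mmax b)
  | MEx x a | MAll x a | MExS x a | MAllS x a => Nat.max x (mmax a)
  end.

Lemma mvars_mmax p B : mmax p < B -> mvars B p.
Proof. induction p; simpl; intros; try split; try lia; try tauto; auto; try apply IHp; try apply IHp1; try apply IHp2; lia. Qed.

Fixpoint sumto (f : nat -> nat) n := match n with 0 => 0 | S n' => f n' + sumto f n' end.
Lemma sumto_ge f n m : m < n -> f m <= sumto f n.
Proof. induction n; simpl; intros; [lia|]. destruct (Nat.eq_dec m n); subst; [lia|]. pose proof (IHn ltac:(lia)); lia. Qed.

Section Core.
Variables (r d B : nat).
Let E := E0 r B.

Fixpoint thr (q : nat) : nat :=
  match q with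
  | 0 => 2
  | S q' => S (sumto (fun m => length (Efam E (thr q') m) * thr q') d) + 2
  end.

Lemma thr_ge q : 2 <= thr q.
Proof. destruct q; simpl; lia. Qed.

Lemma thr_S q m : m < d -> S (length (Efam E (thr q) m) * thr q) <= thr (S q).
Proof.
  intros Hm. simpl. pose proof (sumto_ge (fun m => length (Efam E (thr q) m) * thr q) d m Hm).
  simpl in H. lia.
Qed.

Lemma nth_setbit {N} i (P : N -> Prop) dd u : i < length (dd u) -> nth i (setbit i P dd u) 0 = bP (P u).
Proof.
  intros Hi. unfold setbit. rewrite (nth_map_seq (fun k => if Nat.eqb k i then bP (P u) else nth k (dd u) 0)) by auto.
  rewrite Nat.eqb_refl; auto.
Qed.

Lemma decp_len (M : tree_model r d) rho sg u : length (decp r d M B rho sg u) = S (B + B).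
Proof. unfold decp; rewrite length_map, length_seq; auto. Qed.

Section Steps.
Variables (M1 M2 : tree_model r d) (q : nat).
Let T1 := tm_tree M1.
Let T2 := tm_tree M2.
Variables (rho1 : nat -> option (gV (tm_graph M1))) (sg1 : nat -> gV (tm_graph M1) -> Prop).
Variables (rho2 : nat -> option (gV (tm_graph M2))) (sg2 : nat -> gV (tm_graph M2) -> Prop).
Hypothesis Heq : ty T1 E (thr (S q)) (decp r d M1 B rho1 sg1) d (troot T1) =
                 ty T2 E (thr (S q)) (decp r d M2 B rho2 sg2) d (troot T2).

Lemma set_step X P1 : X < B -> exists P2,
  ty T1 E (thr q) (decp r d M1 B rho1 (supd sg1 X P1)) d (troot T1) =
  ty T2 E (thr q) (decp r d M2 B rho2 (supd sg2 X P2)) d (troot T2).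
Proof.
  intros HX.
  destruct (refine T1 T2 (S (B + B)) (S r) (S (B + X)) (thr (S q)) (thr q) ltac:(lia)
              ltac:(pose proof (thr_ge q); lia) d (fun m Hm => thr_S q m Hm)
              (decp r d M1 B rho1 sg1) (decp r d M2 B rho2 sg2)
              (decp_good r d M1 B rho1 sg1) (decp_good r d M2 B rho2 sg2)
              (troot T1) (troot T2) Heq (fun w => exists h : is_leaf T1 w, P1 (exist _ w h)))
    as [P2 HP2].
  exists (fun a => P2 (proj1_sig a)).
  change (all_lists (S (B + B)) (S r)) with E in HP2.
  rewrite (ty_local T1 E _ _ (setbit (S (B + X)) (fun w => exists h : is_leaf T1 w, P1 (exist _ w h)) (decp r d M1 B rho1 sg1))).
  2:{ intros v _. apply decp_supd; auto. }
  rewrite HP2. apply ty_local. intros v Hv. rewrite decp_supd by auto. apply setbit_ext.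
  apply desc_root_leaf in Hv. simpl. split; [eauto|]. intros [_ H]; auto.
Qed.

Lemma elem_step x (v1 : gV (tm_graph M1)) : x < B -> exists v2,
  ty T1 E (thr q) (decp r d M1 B (upd rho1 x v1) sg1) d (troot T1) =
  ty T2 E (thr q) (decp r d M2 B (upd rho2 x v2) sg2) d (troot T2).
Proof.
  intros Hx. set (P1 := fun w : tnode T1 => proj1_sig v1 = w).
  destruct (refine T1 T2 (S (B + B)) (S r) (S x) (thr (S q)) (thr q) ltac:(lia)
              ltac:(pose proof (thr_ge q); lia) d (fun m Hm => thr_S q m Hm)
              (decp r d M1 B rho1 sg1) (decp r d M2 B rho2 sg2)
              (decp_good r d M1 B rho1 sg1) (decp_good r d M2 B rho2 sg2)
              (troot T1) (troot T2) Heq P1)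
    as [P2 HP2].
  change (all_lists (S (B + B)) (S r)) with E in HP2.
  set (d1' := setbit (S x) P1 (decp r d M1 B rho1 sg1)) in *.
  set (d2' := setbit (S x) P2 (decp r d M2 B rho2 sg2)) in *.
  assert (G1 : forall u, In (d1' u) E) by (intros; apply setbit_good; [lia|apply decp_good]).
  assert (G2 : forall u, In (d2' u) E) by (intros; apply setbit_good; [lia|apply decp_good]).
  set (Q := fun tt : list nat => nth (S x) tt 0 = 1).
  assert (HQ1 : forall u, Q (d1' u) <-> P1 u).
  { intros u. unfold Q, d1'. rewrite nth_setbit by (rewrite decp_len; lia). apply bP_1. }
  assert (HQ2 : forall u, Q (d2' u) <-> P2 u).
  { intros u. unfold Q, d2'. rewrite nth_setbit by (rewrite decp_len; lia). apply bP_1. }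
  pose proof (thr_ge q) as Htq.
  assert (Hh : has E (thr q) Q d (ty T1 E (thr q) d1' d (troot T1))).
  { apply has_ty; auto; [lia|]. exists (proj1_sig v1). split.
    - apply desc_root_leaf, leaf_of_V.
    - apply HQ1. reflexivity. }
  rewrite HP2 in Hh. apply has_ty in Hh as (w2 & Hw2 & HQw2); auto; [|lia].
  apply HQ2 in HQw2.
  assert (Huniq : forall w, desc T2 d (troot T2) w -> P2 w -> w = w2).
  { intros w Hw HPw. apply NNPP; intros Hne.
    pose proof (desc_depth _ _ _ _ Hw) as Dw. pose proof (desc_depth _ _ _ _ Hw2) as Dw2.
    rewrite tdepth_root in Dw, Dw2.
    destruct (exists_split T2 w w2 d ltac:(lia) ltac:(lia) Hne) as (l & Hl & Hi & Hi').
    assert (Hs : splitsem T2 d (troot T2) l Q Q d2').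
    { exists w, w2. split; auto. split; auto. split; [apply HQ2; auto|]. split; [apply HQ2; auto|].
      auto. }
    rewrite <- (spl_ty T2 E (thr q) d2' Q Q l Htq G2) in Hs.
    rewrite <- HP2 in Hs. rewrite (spl_ty T1 E (thr q) d1' Q Q l Htq G1) in Hs.
    destruct Hs as (v & v' & _ & _ & Hv & Hv' & _ & _ & Hne').
    apply HQ1 in Hv. apply HQ1 in Hv'. unfold P1 in *. subst. auto. }
  assert (Hleaf : is_leaf T2 w2) by (apply desc_root_leaf; auto).
  exists (exist _ w2 Hleaf).
  rewrite (ty_local T1 E _ _ d1').
  2:{ intros v _. unfold d1'. apply decp_upd; auto. }
  rewrite HP2. apply ty_local. intros v Hv. rewrite decp_upd by auto. unfold d2'. apply setbit_ext.
  simpl. split; [intros HP; symmetry; apply Huniq; auto|intros <-; auto].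
Qed.
End Steps.

Lemma core (M1 M2 : tree_model r d) (HS : forall i j l, tm_S M1 i j l <-> tm_S M2 i j l) p :
  mvars B p -> forall q, mrank p <= q -> forall rho1 sg1 rho2 sg2,
  ty (tm_tree M1) E (thr q) (decp r d M1 B rho1 sg1) d (troot (tm_tree M1)) =
  ty (tm_tree M2) E (thr q) (decp r d M2 B rho2 sg2) d (troot (tm_tree M2)) ->
  (mso_sat (tm_graph M1) rho1 sg1 p <-> mso_sat (tm_graph M2) rho2 sg2 p).
Proof.
  induction p; simpl; intros Hv q Hq rho1 sg1 rho2 sg2 Heq; pose proof (thr_ge q) as Ht.
  - rewrite (at_eq r d M1 B (thr q) Ht rho1 sg1 n n0), (at_eq r d M2 B (thr q) Ht rho2 sg2 n n0) by tauto.
    fold E. rewrite Heq. tauto.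
  - rewrite (at_adj r d M1 B (thr q) Ht rho1 sg1 n n0), (at_adj r d M2 B (thr q) Ht rho2 sg2 n n0) by tauto.
    fold E. rewrite Heq. split; intros (l & i & j & H1 & H2); exists l, i, j; split; auto; apply HS; auto.
  - pose proof (at_in r d M1 B (thr q) Ht rho1 sg1 n n0 ltac:(tauto) ltac:(tauto)) as H1.
    pose proof (at_in r d M2 B (thr q) Ht rho2 sg2 n n0 ltac:(tauto) ltac:(tauto)) as H2.
    fold E in H1, H2. rewrite Heq in H1. rewrite H1, H2. tauto.
  - tauto.
  - tauto.
  - rewrite (IHp Hv q Hq rho1 sg1 rho2 sg2 Heq). tauto.
  - rewrite (IHp1 (proj1 Hv) q ltac:(lia) rho1 sg1 rho2 sg2 Heq), (IHp2 (proj2 Hv) q ltac:(lia) rho1 sg1 rho2 sg2 Heq). tauto.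
  - rewrite (IHp1 (proj1 Hv) q ltac:(lia) rho1 sg1 rho2 sg2 Heq), (IHp2 (proj2 Hv) q ltac:(lia) rho1 sg1 rho2 sg2 Heq). tauto.
  - rewrite (IHp1 (proj1 Hv) q ltac:(lia) rho1 sg1 rho2 sg2 Heq), (IHp2 (proj2 Hv) q ltac:(lia) rho1 sg1 rho2 sg2 Heq). tauto.
  - destruct q as [|q]; [lia|]. destruct Hv as [Hn Hv]. split.
    + intros (v1 & H). destruct (elem_step M1 M2 q rho1 sg1 rho2 sg2 Heq n v1 Hn) as (v2 & He).
      exists v2. apply (proj1 (IHp Hv q ltac:(lia) _ _ _ _ He)); auto.
    + intros (v2 & H). destruct (elem_step M2 M1 q rho2 sg2 rho1 sg1 (eq_sym Heq) n v2 Hn) as (v1 & He).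
      exists v1. apply (proj2 (IHp Hv q ltac:(lia) _ _ _ _ (eq_sym He))); auto.
  - destruct q as [|q]; [lia|]. destruct Hv as [Hn Hv]. split.
    + intros H v2. destruct (elem_step M2 M1 q rho2 sg2 rho1 sg1 (eq_sym Heq) n v2 Hn) as (v1 & He).
      apply (proj1 (IHp Hv q ltac:(lia) _ _ _ _ (eq_sym He))); auto.
    + intros H v1. destruct (elem_step M1 M2 q rho1 sg1 rho2 sg2 Heq n v1 Hn) as (v2 & He).
      apply (proj2 (IHp Hv q ltac:(lia) _ _ _ _ He)); auto.
  - destruct q as [|q]; [lia|]. destruct Hv as [Hn Hv]. split.
    + intros (P1 & H). destruct (set_step M1 M2 q rho1 sg1 rho2 sg2 Heq n P1 Hn) as (P2 & He).
      exists P2. apply (proj1 (IHp Hv q ltac:(lia) _ _ _ _ He)); auto.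
    + intros (P2 & H). destruct (set_step M2 M1 q rho2 sg2 rho1 sg1 (eq_sym Heq) n P2 Hn) as (P1 & He).
      exists P1. apply (proj2 (IHp Hv q ltac:(lia) _ _ _ _ (eq_sym He))); auto.
  - destruct q as [|q]; [lia|]. destruct Hv as [Hn Hv]. split.
    + intros H P2. destruct (set_step M2 M1 q rho2 sg2 rho1 sg1 (eq_sym Heq) n P2 Hn) as (P1 & He).
      apply (proj1 (IHp Hv q ltac:(lia) _ _ _ _ (eq_sym He))); auto.
    + intros H P1. destruct (set_step M1 M2 q rho1 sg1 rho2 sg2 Heq n P1 Hn) as (P2 & He).
      apply (proj2 (IHp Hv q ltac:(lia) _ _ _ _ He)); auto.
Qed.
End Core.

Lemma bP_false (P : Prop) : ~ P -> bP P = 0.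
Proof. intros H; unfold bP; destruct excluded_middle_informative; tauto. Qed.

Lemma map_zero (f : nat -> nat) l : (forall k, In k l -> f k = 0) -> map f l = repeat 0 (length l).
Proof. induction l; simpl; intros H; auto. rewrite H by auto. f_equal. apply IHl; auto. Qed.

Lemma decp_empty r d (M : tree_model r d) B u :
  decp r d M B (fun _ => None) (fun _ _ => False) u = tm_lab M u :: repeat 0 (B + B).
Proof.
  unfold decp. cbn [seq map]. f_equal.
  transitivity (repeat 0 (length (seq 1 (B + B)))); [|rewrite length_seq; reflexivity].
  apply map_zero. intros k Hk.
  apply in_seq in Hk. destruct k; [lia|]. simpl. destruct (k <? B).
  - apply bP_false. intros (a & Ha & _); discriminate.
  - apply bP_false. intros (h & []).
Qed.

Section Canon.
Variables (r d : nat) (M : tree_model r d) (B t : nat).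
Hypothesis Ht : 1 <= t.
Let T := tm_tree M.
Let E := E0 r B.
Let Ef n := Efam E t n.
Let dec0 := decp r d M B (fun _ => None) (fun _ _ => False).
Let tau0 := ty T E t dec0 d (troot T).

Definition Real n tau := exists u, tdepth T u + n = d /\ ty T E t dec0 n u = tau.

Lemma dec0_good u : In (dec0 u) E.
Proof. apply decp_good. Qed.

Lemma real_child m tau e k : Real (S m) tau -> In (e, k) (combine (Ef m) tau) -> 1 <= k -> Real m e.
Proof.
  intros (u & Hu & <-) Hin Hk. apply ty_S_combine in Hin as [He ->].
  apply cap_ge1 in Hk as (c & [Hc Hp] & Hce); auto. exists c. split; auto.
  rewrite (depth_nonroot T c Hc), Hp. lia.
Qed.

Lemma real_k_le m tau e k : Real (S m) tau -> In (e, k) (combine (Ef m) tau) -> k <= t.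
Proof. intros (u & Hu & <-) Hin. apply ty_S_combine in Hin as [He ->]. apply cap_le. Qed.

Lemma real_has_child m tau : Real (S m) tau -> exists e k, In (e, k) (combine (Ef m) tau) /\ 1 <= k.
Proof.
  intros (u & Hu & <-).
  assert (Hnl : ~ is_leaf T u).
  { intros Hl. pose proof (leaf_depth r d M u Hl) as H. change (tdepth T u = d) in H. lia. }
  unfold is_leaf in Hnl. apply not_all_ex_not in Hnl as (c & Hc).
  apply imply_to_and in Hc as [Hc Hp]. apply NNPP in Hp.
  exists (ty T E t dec0 m c), (cap t (fun c' => child T u c' /\ ty T E t dec0 m c' = ty T E t dec0 m c)).
  split; [apply ty_S_combine; split; auto; apply ty_in_E, dec0_good|].
  apply cap_ge1; auto. exists c; split; auto. split; auto.
Qed.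

Definition code (p : list (list nat * nat)) : list nat :=
  match p with [] => tau0 | (e, _) :: _ => e end.

Fixpoint valid (p : list (list nat * nat)) : Prop :=
  match p with
  | [] => True
  | (e, i) :: p' => valid p' /\ length p' < d /\
      exists k, In (e, k) (combine (Ef (d - S (length p'))) (code p')) /\ i < k
  end.

Lemma valid_inv p : valid p -> length p <= d /\ Real (d - length p) (code p).
Proof.
  induction p as [|[e i] p IH]; simpl.
  - intros _. split; [lia|]. exists (troot T). rewrite tdepth_root. split; [lia|].
    replace (d - 0) with d by lia. reflexivity.
  - intros (Hv & Hl & k & Hin & Hik). destruct (IH Hv) as [_ HR]. split; [lia|].
    replace (d - length p) with (S (d - S (length p))) in HR by lia.
    eapply real_child; eauto. lia.
Qed.

Lemma valid_tl p : valid p -> valid (tl p).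
Proof. destruct p as [|[e i] p]; simpl; tauto. Qed.

Definition CN := {p | valid p}.
Definition croot : CN := exist _ [] I.
Definition cpar (x : CN) : CN := exist _ (tl (proj1_sig x)) (valid_tl _ (proj2_sig x)).
Definition cdepth (x : CN) : nat := length (proj1_sig x).

Lemma cpar_root : cpar croot = croot.
Proof. apply sig_eq; reflexivity. Qed.
Lemma cdepth_root : cdepth croot = 0.
Proof. reflexivity. Qed.
Lemma cdepth_par x : x <> croot -> S (cdepth (cpar x)) = cdepth x.
Proof.
  destruct x as [[|a p] h]; intros Hn.
  - exfalso; apply Hn; apply sig_eq; reflexivity.
  - reflexivity.
Qed.

Definition CT : rtree := RTree CN croot cpar cdepth cpar_root cdepth_root cdepth_par.

Lemma CT_leaf (x : CN) : is_leaf CT x <-> length (proj1_sig x) = d.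
Proof.
  destruct x as [p hp]; simpl. split.
  - intros Hl. destruct (valid_inv p hp) as [Hle HR].
    destruct (Nat.eq_dec (length p) d) as [|Hne]; auto. exfalso.
    replace (d - length p) with (S (d - S (length p))) in HR by lia.
    destruct (real_has_child _ _ HR) as (e & k & Hin & Hk).
    assert (hy : valid ((e, 0) :: p)) by (simpl; split; auto; split; [lia|]; exists k; split; auto).
    apply (Hl (exist _ _ hy)).
    + intros He. apply (f_equal (@proj1_sig _ _)) in He. discriminate.
    + apply sig_eq; reflexivity.
  - intros Hd y Hy Hp. destruct y as [[|[e i] p'] hy].
    + apply Hy; apply sig_eq; reflexivity.
    + apply (f_equal (@proj1_sig _ _)) in Hp. simpl in Hp.
      pose proof hy as hy'. simpl in hy'. destruct hy' as (_ & Hl & _). rewrite Hp in Hl. lia.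
Qed.

Definition clab (x : CN) : nat :=
  if Nat.eqb (length (proj1_sig x)) d then nth 0 (code (proj1_sig x)) 0 else S r.

Lemma real0 tau : Real 0 tau -> exists u, is_leaf T u /\ tau = dec0 u.
Proof.
  intros (u & Hu & <-). exists u. split; auto. apply (depth_leaf r d M). fold T. lia.
Qed.

Lemma c_depth_le (x : tnode CT) : tdepth CT x <= d.
Proof. destruct x as [p h]; simpl. unfold cdepth; simpl. apply (valid_inv p h). Qed.

Lemma c_leaf_depth (x : tnode CT) : is_leaf CT x -> tdepth CT x = d.
Proof. intros H; apply CT_leaf in H; auto. Qed.

Lemma c_lab_leaf (x : tnode CT) : is_leaf CT x -> 1 <= clab x <= r.
Proof.
  intros H. apply CT_leaf in H. unfold clab. rewrite H, Nat.eqb_refl.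
  destruct x as [p hp]; simpl in *. destruct (valid_inv p hp) as [_ HR].
  rewrite H, Nat.sub_diag in HR. apply real0 in HR as (u & Hu & ->).
  unfold dec0. rewrite decp_lab. apply (tm_lab_leaf _ _ M); auto.
Qed.

Lemma c_lab_internal (x : tnode CT) : ~ is_leaf CT x -> clab x = S r.
Proof.
  intros H. unfold clab. destruct (Nat.eqb (length (proj1_sig x)) d) eqn:E'; auto.
  exfalso; apply H; apply CT_leaf; apply Nat.eqb_eq; auto.
Qed.

Definition Mc : tree_model r d :=
  TreeModel r d CT clab (tm_S M) c_depth_le c_leaf_depth c_lab_leaf c_lab_internal
    (tm_S_range _ _ M) (tm_S_sym _ _ M).

Let dec0c := decp r d Mc B (fun _ => None) (fun _ _ => False).

Lemma cty n : forall (x : CN), d - length (proj1_sig x) = n ->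
  ty CT E t dec0c n x = code (proj1_sig x).
Proof.
  induction n; intros [p hp] Hn; simpl in Hn |- *.
  - destruct (valid_inv p hp) as [Hle HR].
    assert (Hd : length p = d) by lia. rewrite Hn in HR.
    apply real0 in HR as (u & Hu & Hc). unfold dec0c. rewrite decp_empty.
    rewrite Hc. unfold dec0. rewrite decp_empty. f_equal. simpl. unfold clab. simpl.
    rewrite Hd, Nat.eqb_refl. rewrite Hc. unfold dec0. rewrite decp_empty. reflexivity.
  - destruct (valid_inv p hp) as [Hle HR]. rewrite Hn in HR.
    destruct HR as (u & Hu & Hcode).
    rewrite <- Hcode. cbn [ty]. fold (Ef n). apply map_ext_in. intros e He.
    set (k := cap t (fun c => child T u c /\ ty T E t dec0 n c = e)).
    assert (Hk : In (e, k) (combine (Ef n) (code p))).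
    { rewrite <- Hcode. apply ty_S_combine. auto. }
    assert (Hval : forall i, valid ((e, i) :: p) <-> i < k).
    { intros i. simpl. replace (d - S (length p)) with n by lia. split.
      - intros (_ & _ & k' & Hk' & Hik). rewrite <- Hcode in Hk'.
        apply ty_S_combine in Hk' as [_ ->]. auto.
      - intros Hik. split; auto. split; [lia|]. exists k; auto. }
    set (mk := fun i => match excluded_middle_informative (valid ((e, i) :: p)) with
                        | left h => exist valid ((e, i) :: p) h
                        | right _ => croot end).
    assert (Hmk : forall i, i < k -> proj1_sig (mk i) = (e, i) :: p).
    { intros i Hi. unfold mk. destruct excluded_middle_informative as [h|h]; auto.
      exfalso; apply h, Hval; auto. }
    rewrite (cap_list t _ (map mk (seq 0 k))).
    + rewrite length_map, length_seq. pose proof (cap_le t (fun c => child T u c /\ ty T E t dec0 n c = e)).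
      fold k in H. lia.
    + apply NoDup_map_on; [apply seq_NoDup|]. intros i j Hi Hj Heq.
      apply in_seq in Hi; apply in_seq in Hj.
      apply (f_equal (@proj1_sig _ _)) in Heq. rewrite !Hmk in Heq by lia. congruence.
    + intros [c hc]. split.
      * intros [[Hc Hp] Hty]. destruct c as [|[e' i] c'].
        -- exfalso; apply Hc; apply sig_eq; reflexivity.
        -- apply (f_equal (@proj1_sig _ _)) in Hp. simpl in Hp. subst c'.
           rewrite IHn in Hty by (simpl; lia). simpl in Hty. subst e'.
           assert (Hi : i < k) by (apply Hval; auto).
           apply in_map_iff. exists i. split; [|apply in_seq; lia].
           apply sig_eq. rewrite Hmk; auto.
      * intros Hin. apply in_map_iff in Hin as (i & Hmi & Hi). apply in_seq in Hi.
        assert (Hc : c = (e, i) :: p) by (rewrite <- Hmk by lia; rewrite Hmi; reflexivity).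
        subst c. split; [split|].
        -- intros He'. apply (f_equal (@proj1_sig _ _)) in He'. discriminate.
        -- apply sig_eq; reflexivity.
        -- rewrite IHn by (simpl; lia). reflexivity.
Qed.

Lemma canon_ty : ty CT E t dec0c d croot = tau0.
Proof. apply (cty d croot). simpl; lia. Qed.

Fixpoint words {X} (A : list X) (n : nat) : list (list X) :=
  match n with
  | 0 => [[]]
  | S n' => [] :: flat_map (fun a => map (cons a) (words A n')) A
  end.

Lemma words_spec {X} (A : list X) n w : length w <= n -> (forall a, In a w -> In a A) -> In w (words A n).
Proof.
  revert w; induction n; intros w Hl Ha; simpl.
  - destruct w; simpl in *; [auto|lia].
  - destruct w as [|a w]; [left; auto|]. right. apply in_flat_map. exists a.
    split; [apply Ha; simpl; auto|]. apply in_map. apply IHn; simpl in *; [lia|auto].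
Qed.

Definition Al := list_prod (flat_map Ef (seq 0 (S d))) (seq 0 (S t)).

Lemma valid_alpha p : valid p -> forall a, In a p -> In a Al.
Proof.
  induction p as [|[e i] p IH]; simpl; [tauto|]. intros (Hv & Hl & k & Hin & Hik) a [<-|Ha]; auto.
  apply in_prod.
  - apply in_flat_map. exists (d - S (length p)). split; [apply in_seq; lia|].
    eapply in_combine_l; eauto.
  - apply in_seq. destruct (valid_inv p Hv) as [_ HR].
    replace (d - length p) with (S (d - S (length p))) in HR by lia.
    pose proof (real_k_le _ _ _ _ HR Hin). lia.
Qed.

Lemma canon_finite : finite_graph (tm_graph Mc).
Proof.
  exists (flat_map (fun p => match excluded_middle_informative (valid p) with
          | left hv => match excluded_middle_informative (is_leaf CT (exist _ p hv)) with
                       | left hl => [exist (fun x => is_leaf CT x) (exist _ p hv) hl]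
                       | right _ => [] end
          | right _ => [] end) (words Al d)).
  intros [[p hv] hl]. apply in_flat_map. exists p. split.
  - apply words_spec; [apply (valid_inv p hv)|apply valid_alpha; auto].
  - destruct (excluded_middle_informative (valid p)) as [hv'|n]; [|contradiction].
    assert (hv' = hv) by apply proof_irrelevance. subst hv'.
    destruct (excluded_middle_informative (is_leaf CT (exist _ p hv))) as [hl'|n]; [|contradiction].
    left. apply sig_eq; reflexivity.
Qed.
End Canon.

Lemma tm_graph_simple r d (M : tree_model r d) : simple_graph (tm_graph M).
Proof.
  split.
  - intros a b (l & [Hw Hm] & HS). exists l. split.
    + split; [apply twalk_rev; auto|]. intros m Hm'. apply Hm, twalk_rev; auto.
    + apply tm_S_sym; auto.
  - intros a (l & [_ Hm] & HS). pose proof (tm_S_range _ _ M _ _ _ HS) as (_ & _ & Hl).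
    specialize (Hm 0 (twalk_nil _ _)). lia.
Qed.

Lemma mso_iso (G H : graph) (f : gV G -> gV H) (g : gV H -> gV G)
  (Hgf : forall x, g (f x) = x) (Hfg : forall y, f (g y) = y)
  (He : forall x y, gE G x y <-> gE H (f x) (f y)) :
  forall p rho sg rho' sg', (forall x, rho' x = option_map f (rho x)) ->
  (forall X a, sg X a <-> sg' X (f a)) ->
  (mso_sat G rho sg p <-> mso_sat H rho' sg' p).
Proof.
  induction p; simpl; intros rho sg rho' sg' Hr Hs.
  - unfold atom2. rewrite !Hr. destruct (rho n) as [a|], (rho n0) as [b|]; simpl; try tauto.
    split; [intros ->; auto|]. intros Hab. rewrite <- (Hgf a), <- (Hgf b), Hab; auto.
  - unfold atom2. rewrite !Hr. destruct (rho n) as [a|], (rho n0) as [b|]; simpl; try tauto. apply He.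
  - rewrite Hr. destruct (rho n); simpl; auto. tauto.
  - tauto.
  - tauto.
  - rewrite (IHp rho sg rho' sg'); tauto.
  - rewrite (IHp1 rho sg rho' sg'), (IHp2 rho sg rho' sg'); tauto.
  - rewrite (IHp1 rho sg rho' sg'), (IHp2 rho sg rho' sg'); tauto.
  - rewrite (IHp1 rho sg rho' sg'), (IHp2 rho sg rho' sg'); tauto.
  - split.
    + intros (v & Hv). exists (f v). apply (IHp (upd rho n v) sg); auto.
      intros x. unfold upd. destruct (Nat.eqb x n); auto.
    + intros (w & Hw). exists (g w). apply (IHp (upd rho n (g w)) sg (upd rho' n w) sg'); auto.
      intros x. unfold upd. destruct (Nat.eqb x n); simpl; auto. rewrite Hfg; auto.
  - split.
    + intros Hv w. apply (IHp (upd rho n (g w)) sg (upd rho' n w) sg'); auto.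
      intros x. unfold upd. destruct (Nat.eqb x n); simpl; auto. rewrite Hfg; auto.
    + intros Hw v. apply (IHp (upd rho n v) sg (upd rho' n (f v)) sg'); auto.
      intros x. unfold upd. destruct (Nat.eqb x n); auto.
  - split.
    + intros (P & HP). exists (fun b => P (g b)). apply (IHp rho (supd sg n P)); auto.
      intros X a. unfold supd. destruct (Nat.eqb X n); auto. rewrite Hgf; tauto.
    + intros (Q & HQ). exists (fun a => Q (f a)). apply (IHp rho (supd sg n (fun a => Q (f a))) rho' (supd sg' n Q)); auto.
      intros X a. unfold supd. destruct (Nat.eqb X n); auto. tauto.
  - split.
    + intros HP Q. apply (IHp rho (supd sg n (fun a => Q (f a))) rho' (supd sg' n Q)); auto.
      intros X a. unfold supd. destruct (Nat.eqb X n); auto. tauto.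
    + intros HQ P. apply (IHp rho (supd sg n P) rho' (supd sg' n (fun b => P (g b)))); auto.
      intros X a. unfold supd. destruct (Nat.eqb X n); auto. rewrite Hgf; tauto.
Qed.

Fixpoint f2m (p : fo) : mso :=
  match p with
  | FEq x y => MEq x y
  | FAdj x y => MAdj x y
  | FTrue => MTrue
  | FFalse => MFalse
  | FNot a => MNot (f2m a)
  | FAnd a b => MAnd (f2m a) (f2m b)
  | FOr a b => MOr (f2m a) (f2m b)
  | FImp a b => MImp (f2m a) (f2m b)
  | FEx x a => MEx x (f2m a)
  | FAll x a => MAll x (f2m a)
  end.

Lemma f2m_sat G p : forall rho sg, fo_sat G rho p <-> mso_sat G rho sg (f2m p).
Proof.
  induction p; simpl; intros rho sg; try tauto.
  - rewrite (IHp rho sg); tauto.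
  - rewrite (IHp1 rho sg), (IHp2 rho sg); tauto.
  - rewrite (IHp1 rho sg), (IHp2 rho sg); tauto.
  - rewrite (IHp1 rho sg), (IHp2 rho sg); tauto.
  - split; intros (v & Hv); exists v; [apply (proj1 (IHp _ sg))|apply (proj2 (IHp _ sg))]; auto.
  - split; intros Hv v; [apply (proj1 (IHp _ sg))|apply (proj2 (IHp _ sg))]; auto.
Qed.

Lemma f2m_wf p : forall Γ Δ, fo_wf Γ p -> mso_wf Γ Δ (f2m p).
Proof. induction p; simpl; intros; try tauto; try (split; [apply IHp1|apply IHp2]; tauto); auto. Qed.

Lemma key r d (M : tree_model r d) p :
  (forall G, TMfin r d G -> mso_models G p) -> mso_models (tm_graph M) p.
Proof.
  intros Hfin. set (B := S (mmax p)). set (q := mrank p). set (t := thr r d B q).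
  assert (Ht : 1 <= t) by (pose proof (thr_ge r d B q); unfold t; lia).
  set (Mc' := Mc r d M B t Ht).
  assert (Hc : mso_models (tm_graph Mc') p).
  { apply Hfin. split; [split|].
    - apply tm_graph_simple.
    - exists Mc'. exists (fun x => x), (fun x => x). repeat split; auto.
    - apply canon_finite. }
  unfold mso_models in *.
  apply (proj2 (core r d B M Mc' (fun i j l => iff_refl _) p (mvars_mmax p B ltac:(unfold B; lia)) q (le_n _)
           (fun _ => None) (fun _ _ => False) (fun _ => None) (fun _ _ => False) (eq_sym (canon_ty r d M B t Ht)))).
  auto.
Qed.

Lemma mso_main r d p : MSO_theory (TM r d) p <-> MSO_theory (TMfin r d) p.
Proof.
  split.
  - intros [Hs H]. split; auto. intros G [HG _]. auto.
  - intros [Hs H]. split; auto. intros G [_ (M & f & g & Hgf & Hfg & He)].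
    pose proof (key r d M p H) as HM. unfold mso_models in *.
    apply (proj1 (mso_iso _ _ f g Hgf Hfg He p (fun _ => None) (fun _ _ => False) (fun _ => None) (fun _ _ => False)
              (fun _ => eq_refl) (fun _ _ => iff_refl _))); auto.
Qed.

Theorem corollary10 :
  forall r d : nat,
    (forall φ : fo, FO_theory (TM r d) φ <-> FO_theory (TMfin r d) φ) /\
    (forall φ : mso, MSO_theory (TM r d) φ <-> MSO_theory (TMfin r d) φ).
Proof.
  intros r d. split; [|apply mso_main].
  intros p. split.
  - intros [Hs H]. split; auto. intros G [HG _]. auto.
  - intros [Hs H]. split; auto. intros G HG.
    assert (Hm : MSO_theory (TM r d) (f2m p)).
    { apply mso_main. split; [apply f2m_wf; auto|]. intros G' HG'.
      unfold mso_models. apply (proj1 (f2m_sat G' p _ _)). apply H; auto. }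
    destruct Hm as [_ Hm]. unfold fo_models. apply (proj2 (f2m_sat G p _ (fun _ _ => False))).
    apply Hm; auto.
Qed.
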